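(* Let $\gamma:I\to\mathbb{R}^2$ be a $C^\infty$ curve with $0\in I$. Then $\gamma'(0)=\gamma''(0)=\gamma'''(0)=\mathbf{0}$, $A\neq0$ and $-77B^2+105AD+60AC=0$ hold if and only if $\gamma$ is $\mathcal{A}$-equivalent at $s=0$ to $\gamma_1(s)=(s^4,s^5)+h(s)$ for some $\mathbb{R}^2$-valued $C^\infty$ function $h$ with $h(0)=h'(0)=\cdots=h^{(7)}(0)=\mathbf{0}$.
   Context: $A=\det(\gamma^{(5)}(0),\gamma^{(4)}(0))$, $B=\det(\gamma^{(6)}(0),\gamma^{(4)}(0))$, $C=\det(\gamma^{(7)}(0),\gamma^{(4)}(0))$, $D=\det(\gamma^{(6)}(0),\gamma^{(5)}(0))$. $\mathcal{A}$-equivalence: equivalence via $C^\infty$ diffeomorphism germs of source and target. *)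

(* Defs.v *)
From Stdlib Require Import Reals List.
From Coquelicot Require Import Coquelicot.
Open Scope R_scope.

Definition smooth1_near (f : R -> R) (c e : R) : Prop :=
  forall (n : nat) (x : R), Rabs (x - c) < e -> ex_derive (Derive_n f n) x.

Definition smooth1_on_interval (f : R -> R) (a b : R) : Prop :=
  forall (n : nat) (x : R), a < x < b -> ex_derive (Derive_n f n) x.

Definition curve_smooth_near (g : R -> R * R) (c e : R) : Prop :=
  smooth1_near (fun t => fst (g t)) c e /\ smooth1_near (fun t => snd (g t)) c e.

(* Partial derivatives of f : R^2 -> R; true = first variable. *)
Definition partial (b : bool) (f : R * R -> R) : R * R -> R :=
  fun p => if b then Derive (fun t => f (t, snd p)) (fst p)
           else Derive (fun t => f (fst p, t)) (snd p).

Definition ex_partial (b : bool) (f : R * R -> R) (p : R * R) : Prop :=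
  if b then ex_derive (fun t => f (t, snd p)) (fst p)
  else ex_derive (fun t => f (fst p, t)) (snd p).

Definition iter_partial (ds : list bool) (f : R * R -> R) : R * R -> R :=
  fold_right partial f ds.

Definition in_square (q : R * R) (e : R) (p : R * R) : Prop :=
  Rabs (fst p - fst q) < e /\ Rabs (snd p - snd q) < e.

Definition smooth2_near (f : R * R -> R) (q : R * R) (e : R) : Prop :=
  forall (ds : list bool) (p : R * R), in_square q e p ->
    (forall b : bool, ex_partial b (iter_partial ds f) p) /\
    continuous (iter_partial ds f) p.

Definition map2_smooth_near (F : R * R -> R * R) (q : R * R) (e : R) : Prop :=
  smooth2_near (fun p => fst (F p)) q e /\ smooth2_near (fun p => snd (F p)) q e.

Definition diffeo1_germ (phi : R -> R) (x0 : R) : Prop :=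
  exists (e : R) (chi : R -> R), 0 < e /\
    smooth1_near phi x0 e /\ smooth1_near chi (phi x0) e /\
    (forall x, Rabs (x - x0) < e -> chi (phi x) = x) /\
    (forall y, Rabs (y - phi x0) < e -> phi (chi y) = y).

Definition diffeo2_germ (psi : R * R -> R * R) (q : R * R) : Prop :=
  exists (e : R) (chi : R * R -> R * R), 0 < e /\
    map2_smooth_near psi q e /\ map2_smooth_near chi (psi q) e /\
    (forall p, in_square q e p -> chi (psi p) = p) /\
    (forall p, in_square (psi q) e p -> psi (chi p) = p).

Definition A_equivalent_at0 (g d : R -> R * R) : Prop :=
  exists (phi : R -> R) (psi : R * R -> R * R) (e : R),
    phi 0 = 0 /\ psi (g 0) = d 0 /\
    diffeo1_germ phi 0 /\ diffeo2_germ psi (g 0) /\ 0 < e /\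
    (forall s, Rabs s < e -> psi (g s) = d (phi s)).

Definition dn (g : R -> R * R) (k : nat) (t : R) : R * R :=
  (Derive_n (fun s => fst (g s)) k t, Derive_n (fun s => snd (g s)) k t).

Definition det2 (u v : R * R) : R := fst u * snd v - snd u * fst v.

Definition coefA (g : R -> R * R) : R := det2 (dn g 5 0) (dn g 4 0).
Definition coefB (g : R -> R * R) : R := det2 (dn g 6 0) (dn g 4 0).
Definition coefC (g : R -> R * R) : R := det2 (dn g 7 0) (dn g 4 0).
Definition coefD (g : R -> R * R) : R := det2 (dn g 6 0) (dn g 5 0).

(* Main.v *)
Require Import Defs.
From Stdlib Require Import Reals List Lra Lia Psatz FunctionalExtensionality ClassicalEpsilon Factorial.
From Coquelicot Require Import Coquelicot.
Open Scope R_scope. Import ListNotations.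

Definition Cn (n : nat) (f : R -> R) (x : R) : Prop :=
  locally x (fun y => forall k, (k < n)%nat -> ex_derive (Derive_n f k) y).

Lemma Derive_n_DS f k : Derive_n (Derive f) k = Derive_n f (S k).
Proof.
  apply functional_extensionality; intro x.
  change (Derive f) with (Derive_n f 1). rewrite Derive_n_comp.
  replace (k+1)%nat with (S k) by lia. reflexivity. Qed.

Lemma Derive_n_DS' f k : Derive_n f (S k) = Derive_n (Derive f) k.
Proof. now rewrite Derive_n_DS. Qed.

Lemma Cn_S n f x : Cn (S n) f x <-> locally x (ex_derive f) /\ Cn n (Derive f) x.
Proof.
  unfold Cn; split.
  - intro H; split.
    + apply filter_imp with (2 := H). intros y Hy. apply (Hy 0%nat). lia.
    + apply filter_imp with (2 := H). intros y Hy k Hk.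
      rewrite Derive_n_DS. apply (Hy (S k)). lia.
  - intros [H1 H2]. generalize (filter_and _ _ H1 H2). apply filter_imp.
    intros y [Hy1 Hy2] k Hk. destruct k. exact Hy1.
    rewrite <- Derive_n_DS. apply Hy2. lia. Qed.

Lemma Cn_le m n f x : (m <= n)%nat -> Cn n f x -> Cn m f x.
Proof. intros Hmn H. apply filter_imp with (2 := H). intros y Hy k Hk. apply Hy. lia. Qed.

Lemma Cn_0 f x : Cn 0 f x.
Proof. unfold Cn. apply filter_forall. intros y k Hk. lia. Qed.

Lemma Cn_loc n f x : Cn n f x -> locally x (Cn n f).
Proof. intro H. apply locally_locally in H. exact H. Qed.

Lemma Cn_ext_loc n f g x : locally x (fun y => f y = g y) -> Cn n f x -> Cn n g x.
Proof.
  intros He H. unfold Cn.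
  apply locally_locally in He.
  generalize (filter_and _ _ He H). apply filter_imp.
  intros y [Hy1 Hy2] k Hk. apply locally_locally in Hy1.
  apply ex_derive_ext_loc with (Derive_n f k).
  - apply filter_imp with (2 := Hy1). intros z Hz. apply Derive_n_ext_loc. exact Hz.
  - now apply Hy2. Qed.

Lemma Cn_ex_derive_n n f x : Cn n f x ->
  locally x (fun y => forall k, (k <= n)%nat -> ex_derive_n f k y).
Proof.
  intro H. apply filter_imp with (2 := H). intros y Hy k Hk.
  destruct k. exact I. simpl. apply Hy. lia. Qed.

Lemma Cn_const n c x : Cn n (fun _ => c) x.
Proof.
  revert c x; induction n; intros c x. apply Cn_0.
  apply Cn_S; split. apply filter_forall; intros; apply ex_derive_const.
  apply Cn_ext_loc with (fun _ => 0). apply filter_forall. intros y.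
  rewrite Derive_const. reflexivity. apply IHn. Qed.

Lemma Cn_id n x : Cn n (fun y => y) x.
Proof.
  destruct n. apply Cn_0. apply Cn_S; split. apply filter_forall; intros; apply (@ex_derive_id R_AbsRing).
  apply Cn_ext_loc with (fun _ => 1). apply filter_forall. intros y.
  change (1 = Derive id y). rewrite Derive_id. reflexivity. apply Cn_const. Qed.

Lemma Cn_plus n f g x : Cn n f x -> Cn n g x -> Cn n (fun y => f y + g y) x.
Proof.
  revert f g x; induction n; intros f g x Hf Hg. apply Cn_0.
  apply Cn_S in Hf as [Hf1 Hf2]; apply Cn_S in Hg as [Hg1 Hg2].
  apply Cn_S; split.
  - generalize (filter_and _ _ Hf1 Hg1). apply filter_imp. intros y [a b].
    exact (@ex_derive_plus R_AbsRing R_NormedModule f g y a b).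
  - apply Cn_ext_loc with (fun y => Derive f y + Derive g y).
    generalize (filter_and _ _ Hf1 Hg1). apply filter_imp. intros y [a b].
    rewrite Derive_plus; auto.
    now apply IHn. Qed.

Lemma Cn_scal n c f x : Cn n f x -> Cn n (fun y => c * f y) x.
Proof.
  revert f x; induction n; intros f x Hf. apply Cn_0.
  apply Cn_S in Hf as [Hf1 Hf2].
  apply Cn_S; split.
  - apply filter_imp with (2 := Hf1). intros y a. now apply ex_derive_scal.
  - apply Cn_ext_loc with (fun y => c * Derive f y).
    apply filter_imp with (2 := Hf1). intros y a. rewrite Derive_scal; auto.
    now apply IHn. Qed.

Lemma Cn_opp n f x : Cn n f x -> Cn n (fun y => - f y) x.
Proof.
  intro H. apply Cn_ext_loc with (fun y => (-1) * f y).
  apply filter_forall; intro; ring. now apply Cn_scal. Qed.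

Lemma Cn_minus n f g x : Cn n f x -> Cn n g x -> Cn n (fun y => f y - g y) x.
Proof. intros. apply Cn_plus; auto. now apply Cn_opp. Qed.

Lemma Cn_mult n f g x : Cn n f x -> Cn n g x -> Cn n (fun y => f y * g y) x.
Proof.
  revert f g x; induction n; intros f g x Hf Hg. apply Cn_0.
  assert (Hf' := Hf); assert (Hg' := Hg).
  apply Cn_S in Hf as [Hf1 Hf2]; apply Cn_S in Hg as [Hg1 Hg2].
  apply Cn_S; split.
  - generalize (filter_and _ _ Hf1 Hg1). apply filter_imp. intros y [a b].
    now apply ex_derive_mult.
  - apply Cn_ext_loc with (fun y => Derive f y * g y + f y * Derive g y).
    generalize (filter_and _ _ Hf1 Hg1). apply filter_imp. intros y [a b].
    rewrite Derive_mult; auto.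
    apply Cn_plus; apply IHn; auto; eapply Cn_le; try eassumption; lia. Qed.

Lemma ex_derive_continuity_pt f x : ex_derive f x -> continuity_pt f x.
Proof.
  intros [l Hl]. apply derivable_continuous_pt.
  apply ex_derive_Reals_0. exists l. exact Hl. Qed.

Lemma Cn_comp n f g x : Cn n f (g x) -> Cn n g x -> Cn n (fun y => f (g y)) x.
Proof.
  revert f g x; induction n; intros f g x Hf Hg. apply Cn_0.
  assert (Hf' := Hf); assert (Hg' := Hg).
  apply Cn_S in Hf as [Hf1 Hf2]; apply Cn_S in Hg as [Hg1 Hg2].
  assert (Hc : continuity_pt g x) by (apply ex_derive_continuity_pt; now apply locally_singleton in Hg1).
  assert (Hf1' : locally x (fun y => ex_derive f (g y))) by (now apply locally_pt_comp).
  apply Cn_S; split.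
  - generalize (filter_and _ _ Hf1' Hg1). apply filter_imp. intros y [a b].
    exact (@ex_derive_comp R_AbsRing R_NormedModule f g y a b).
  - apply Cn_ext_loc with (fun y => Derive f (g y) * Derive g y).
    generalize (filter_and _ _ Hf1' Hg1). apply filter_imp. intros y [a b].
    rewrite (Derive_comp f g y a b). apply Rmult_comm.
    apply Cn_mult; auto. apply IHn; auto. eapply Cn_le; try eassumption; lia. Qed.

Definition Cinf f x := forall n, Cn n f x.

Lemma Cn_inv n x : x <> 0 -> Cn n Rinv x.
Proof.
  revert x; induction n; intros x Hx. apply Cn_0.
  assert (Hl : locally x (fun y => y <> 0)).
  { apply locally_open with (D := fun y => y <> 0); auto.
    apply open_neq. }
  apply Cn_S; split.
  - apply filter_imp with (2 := Hl). intros y Hy.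
    apply (ex_derive_inv (fun y => y)); auto. apply (@ex_derive_id R_AbsRing).
  - apply Cn_ext_loc with (fun y => - (Rinv y * Rinv y)).
    apply filter_imp with (2 := Hl). intros y Hy.
    change (- (/ y * / y) = Derive (fun y => / (fun z => z) y) y).
    rewrite Derive_inv; auto. change (Derive (fun z => z) y) with (Derive id y).
    rewrite Derive_id. field. auto. apply (@ex_derive_id R_AbsRing).
    apply Cn_opp.
    apply Cn_mult; apply IHn; auto.
Qed.

Lemma Dn_plus n f g x : Cn n f x -> Cn n g x ->
  Derive_n (fun y => f y + g y) n x = Derive_n f n x + Derive_n g n x.
Proof. intros. apply Derive_n_plus; now apply Cn_ex_derive_n. Qed.

Lemma Dn_minus n f g x : Cn n f x -> Cn n g x ->
  Derive_n (fun y => f y - g y) n x = Derive_n f n x - Derive_n g n x.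
Proof. intros. apply Derive_n_minus; now apply Cn_ex_derive_n. Qed.

Lemma Dn_S_loc k f h x : locally x (fun y => Derive f y = h y) ->
  Derive_n f (S k) x = Derive_n h k x.
Proof. intro H. rewrite Derive_n_DS'. now apply Derive_n_ext_loc. Qed.

Lemma Dn_S_mult k f g x : Cn (S k) f x -> Cn (S k) g x ->
  Derive_n (fun y => f y * g y) (S k) x =
  Derive_n (fun y => Derive f y * g y) k x + Derive_n (fun y => f y * Derive g y) k x.
Proof.
  intros Hf Hg. apply Cn_S in Hf as Hf'. apply Cn_S in Hg as Hg'.
  destruct Hf' as [Hf1 Hf2]; destruct Hg' as [Hg1 Hg2].
  rewrite (Dn_S_loc k _ (fun y => Derive f y * g y + f y * Derive g y)).
  apply Dn_plus; apply Cn_mult; auto; eapply Cn_le; try eassumption; lia.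
  generalize (filter_and _ _ Hf1 Hg1). apply filter_imp. intros y [a b].
  now apply Derive_mult. Qed.

Lemma Dn_S_comp k f g x : Cn (S k) f (g x) -> Cn (S k) g x ->
  Derive_n (fun y => f (g y)) (S k) x = Derive_n (fun y => Derive f (g y) * Derive g y) k x.
Proof.
  intros Hf Hg. apply Cn_S in Hf as [Hf1 Hf2]; apply Cn_S in Hg as [Hg1 Hg2].
  assert (Hc : continuity_pt g x) by (apply ex_derive_continuity_pt; now apply locally_singleton in Hg1).
  assert (Hf1' : locally x (fun y => ex_derive f (g y))) by (now apply locally_pt_comp).
  apply Dn_S_loc.
  generalize (filter_and _ _ Hf1' Hg1). apply filter_imp. intros y [a b].
  rewrite (Derive_comp f g y a b). apply Rmult_comm. Qed.

Definition JetEq n f g x := forall k, (k <= n)%nat -> Derive_n f k x = Derive_n g k x.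

Lemma JetEq_D n f g x : JetEq (S n) f g x -> JetEq n (Derive f) (Derive g) x.
Proof. intros H k Hk. rewrite !Derive_n_DS. apply H. lia. Qed.

Lemma JetEq_mult n f1 f2 g1 g2 x : Cn n f1 x -> Cn n f2 x -> Cn n g1 x -> Cn n g2 x ->
  JetEq n f1 g1 x -> JetEq n f2 g2 x ->
  JetEq n (fun y => f1 y * f2 y) (fun y => g1 y * g2 y) x.
Proof.
  revert f1 f2 g1 g2; induction n; intros f1 f2 g1 g2 H1 H2 H3 H4 J1 J2 k Hk.
  - assert (k = 0)%nat by lia; subst. simpl.
    generalize (J1 0%nat (le_n _)) (J2 0%nat (le_n _)); simpl; intros -> ->; auto.
  - destruct k. simpl.
    generalize (J1 0%nat ltac:(lia)) (J2 0%nat ltac:(lia)); simpl; intros -> ->; auto.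
    assert (Cn (S k) f1 x) by (eapply Cn_le; [|eassumption]; lia).
    assert (Cn (S k) f2 x) by (eapply Cn_le; [|eassumption]; lia).
    assert (Cn (S k) g1 x) by (eapply Cn_le; [|eassumption]; lia).
    assert (Cn (S k) g2 x) by (eapply Cn_le; [|eassumption]; lia).
    rewrite !Dn_S_mult; auto.
    assert (K1 : Cn n f1 x) by (apply (Cn_le n (S n)); [lia|exact H1]).
    assert (K2 : Cn n f2 x) by (apply (Cn_le n (S n)); [lia|exact H2]).
    assert (K3 : Cn n g1 x) by (apply (Cn_le n (S n)); [lia|exact H3]).
    assert (K4 : Cn n g2 x) by (apply (Cn_le n (S n)); [lia|exact H4]).
    apply Cn_S in H1 as [_ H1']; apply Cn_S in H2 as [_ H2'];
    apply Cn_S in H3 as [_ H3']; apply Cn_S in H4 as [_ H4'].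
    assert (J1' : JetEq n f1 g1 x) by (intros i Hi; apply J1; lia).
    assert (J2' : JetEq n f2 g2 x) by (intros i Hi; apply J2; lia).
    f_equal.
    + apply (IHn (Derive f1) f2 (Derive g1) g2 H1' K2 H3' K4 (JetEq_D _ _ _ _ J1) J2'). lia.
    + apply (IHn f1 (Derive f2) g1 (Derive g2) K1 H2' K3 H4' J1' (JetEq_D _ _ _ _ J2)). lia.
Qed.

Lemma Van_mult j : forall a b f g x, (j < a + b)%nat -> Cn j f x -> Cn j g x ->
  (forall k, (k <= j)%nat -> (k < a)%nat -> Derive_n f k x = 0) ->
  (forall k, (k <= j)%nat -> (k < b)%nat -> Derive_n g k x = 0) ->
  Derive_n (fun y => f y * g y) j x = 0.
Proof.
  induction j; intros a b f g x Hj Hf Hg Vf Vg.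
  - simpl. destruct a.
    assert (V0 := Vg 0%nat ltac:(lia) ltac:(lia)); simpl in V0; rewrite V0; ring.
    assert (V0 := Vf 0%nat ltac:(lia) ltac:(lia)); simpl in V0; rewrite V0; ring.
  - rewrite Dn_S_mult; auto.
    apply Cn_S in Hf as Hf'; destruct Hf' as [_ Hf']. apply Cn_S in Hg as Hg'; destruct Hg' as [_ Hg'].
    assert (C1 : Cn j f x) by (apply (Cn_le j (S j)); [lia|exact Hf]).
    assert (C2 : Cn j g x) by (apply (Cn_le j (S j)); [lia|exact Hg]).
    assert (W1 : forall k, (k <= j)%nat -> (k < pred a)%nat -> Derive_n (Derive f) k x = 0).
    { intros k Hk1 Hk2. rewrite Derive_n_DS. apply Vf; lia. }
    assert (W2 : forall k, (k <= j)%nat -> (k < b)%nat -> Derive_n g k x = 0).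
    { intros k Hk1 Hk2. apply Vg; lia. }
    assert (W3 : forall k, (k <= j)%nat -> (k < a)%nat -> Derive_n f k x = 0).
    { intros k Hk1 Hk2. apply Vf; lia. }
    assert (W4 : forall k, (k <= j)%nat -> (k < pred b)%nat -> Derive_n (Derive g) k x = 0).
    { intros k Hk1 Hk2. rewrite Derive_n_DS. apply Vg; lia. }
    rewrite (IHj (pred a) b (Derive f) g x ltac:(lia) Hf' C2 W1 W2).
    rewrite (IHj a (pred b) f (Derive g) x ltac:(lia) C1 Hg' W3 W4). ring.
Qed.

Lemma Van_comp n : forall a u g x, Cn n u (g x) -> Cn n g x ->
  (forall k, (k <= n)%nat -> (k < a)%nat -> Derive_n u k (g x) = 0) ->
  forall i, (i <= n)%nat -> (i < a)%nat -> Derive_n (fun y => u (g y)) i x = 0.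
Proof.
  induction n; intros a u g x Hu Hg Vu i Hi Ha.
  - assert (i = 0)%nat by lia; subst. simpl. apply (Vu 0%nat ltac:(lia) ltac:(lia)).
  - destruct i. simpl. apply (Vu 0%nat ltac:(lia) ltac:(lia)).
    assert (C1 : Cn (S i) u (g x)) by (apply (Cn_le (S i) (S n)); [lia|exact Hu]).
    assert (C2 : Cn (S i) g x) by (apply (Cn_le (S i) (S n)); [lia|exact Hg]).
    rewrite Dn_S_comp; auto.
    assert (C3 : Cn n g x) by (apply (Cn_le n (S n)); [lia|exact Hg]).
    apply Cn_S in Hu as [_ Hu']; apply Cn_S in Hg as [_ Hg'].
    assert (C4 : Cn i (fun y => Derive u (g y)) x).
    { apply Cn_comp; apply (Cn_le i n); try lia; auto. }
    assert (C5 : Cn i (Derive g) x) by (apply (Cn_le i n); [lia|exact Hg']).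
    apply (Van_mult i (pred a) 0 _ _ x ltac:(lia) C4 C5).
    + intros k Hk1 Hk2. apply (IHn (pred a) (Derive u) g x Hu' C3); try lia.
      intros l Hl1 Hl2. rewrite Derive_n_DS. apply Vu; lia.
    + intros; lia.
Qed.

Fixpoint peval (p : list R) (x : R) : R :=
  match p with nil => 0 | a :: q => a + x * peval q x end.
Fixpoint padd (p q : list R) : list R :=
  match p, q with nil, _ => q | _, nil => p | a :: p', b :: q' => (a + b) :: padd p' q' end.
Fixpoint pder (p : list R) : list R :=
  match p with nil => nil | a :: q => padd q (0 :: pder q) end.
Fixpoint pmul (p q : list R) : list R :=
  match p with nil => nil | a :: p' => padd (map (Rmult a) q) (0 :: pmul p' q) end.

Lemma peval_padd p q x : peval (padd p q) x = peval p x + peval q x.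
Proof.
  revert q; induction p as [|a p IH]; intros [|b q]; simpl; try ring.
  rewrite IH. ring. Qed.

Lemma peval_map a q x : peval (map (Rmult a) q) x = a * peval q x.
Proof. induction q; simpl; try rewrite IHq; ring. Qed.

Lemma peval_pmul p q x : peval (pmul p q) x = peval p x * peval q x.
Proof.
  induction p as [|a p IH]; simpl. ring.
  rewrite peval_padd, peval_map. simpl. rewrite IH. ring. Qed.

Lemma is_derive_peval p x : is_derive (peval p) x (peval (pder p) x).
Proof.
  apply is_derive_Reals.
  induction p as [|a p IH]; simpl.
  - apply (derivable_pt_lim_const 0).
  - rewrite peval_padd. simpl.
    replace (peval p x + (0 + x * peval (pder p) x)) with (0 + (1 * peval p x + x * peval (pder p) x)) by ring.
    apply (derivable_pt_lim_plus (fun _ => a) (fun y => y * peval p y)).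
    apply derivable_pt_lim_const. apply (derivable_pt_lim_mult (fun y => y) (peval p)).
    apply derivable_pt_lim_id. exact IH.
Qed.

Lemma Derive_peval p : Derive (peval p) = peval (pder p).
Proof. apply functional_extensionality; intro x. apply is_derive_unique, is_derive_peval. Qed.

Lemma Cn_peval n p x : Cn n (peval p) x.
Proof.
  revert p; induction n; intro p. apply Cn_0.
  apply Cn_S; split. apply filter_forall; intro y. eexists; apply is_derive_peval.
  rewrite Derive_peval. apply IHn. Qed.

Lemma nth_padd p q k : nth k (padd p q) 0 = nth k p 0 + nth k q 0.
Proof.
  revert q k; induction p as [|a p IH]; intros [|b q] [|k]; simpl; try ring; auto.
  all: destruct k; simpl; ring. Qed.

Lemma nth_pder p k : nth k (pder p) 0 = INR (S k) * nth (S k) p 0.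
Proof.
  revert k; induction p as [|a p IH]; intro k; simpl.
  - destruct k; simpl; ring.
  - rewrite nth_padd. destruct k. simpl; ring.
    cbn [nth]. rewrite IH, !S_INR. ring. Qed.

Lemma Dn_peval0 k p : Derive_n (peval p) k 0 = INR (fact k) * nth k p 0.
Proof.
  revert p; induction k; intro p.
  - simpl. destruct p; simpl; ring.
  - rewrite Derive_n_DS', Derive_peval, IHk, nth_pder.
    change (fact (S k)) with (S k * fact k)%nat. rewrite mult_INR. ring. Qed.

Definition tay7 (f : R -> R) : list R :=
  map (fun k => Derive_n f k 0 / INR (fact k)) (seq 0 8).

Lemma JetEq_tay7 f : JetEq 7 f (peval (tay7 f)) 0.
Proof.
  intros k Hk. rewrite Dn_peval0. unfold tay7.
  set (F := fun k => Derive_n f k 0 / INR (fact k)).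
  rewrite (nth_indep _ 0 (F 0%nat)).
  2:{ rewrite length_map, length_seq. lia. }
  rewrite map_nth, seq_nth by lia. unfold F. simpl. field. apply not_0_INR, fact_neq_0. Qed.


Lemma iter_partial_app ds b F : iter_partial ds (partial b F) = iter_partial (ds ++ [b]) F.
Proof. unfold iter_partial. now rewrite fold_right_app. Qed.

Lemma smooth2_partial F Q e b : smooth2_near F Q e -> smooth2_near (partial b F) Q e.
Proof. intros H ds p Hp. rewrite iter_partial_app. now apply H. Qed.

Lemma in_square_open Q e p : in_square Q e p -> locally p (in_square Q e).
Proof.
  destruct p as [x y]. intros [H1 H2]. simpl in *.
  apply (locally_2d_locally (fun u v => in_square Q e (u, v))).
  set (d := Rmin (e - Rabs (x - fst Q)) (e - Rabs (y - snd Q))).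
  assert (Hd : 0 < d) by (unfold d; apply Rmin_case; lra).
  exists (mkposreal d Hd). intros u v Hu Hv. simpl in *.
  assert (d <= e - Rabs (x - fst Q)) by apply Rmin_l.
  assert (d <= e - Rabs (y - snd Q)) by apply Rmin_r.
  split; simpl.
  - replace (u - fst Q) with ((u - x) + (x - fst Q)) by ring.
    eapply Rle_lt_trans. apply Rabs_triang. lra.
  - replace (v - snd Q) with ((v - y) + (y - snd Q)) by ring.
    eapply Rle_lt_trans. apply Rabs_triang. lra.
Qed.

Lemma in_square_comp Q e c1 c2 t : continuity_pt c1 t -> continuity_pt c2 t ->
  in_square Q e (c1 t, c2 t) -> locally t (fun s => in_square Q e (c1 s, c2 s)).
Proof.
  intros H1 H2 [K1 K2]; simpl in *.
  assert (L1 : locally t (fun s => Rabs (c1 s - fst Q) < e)).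
  { apply (locally_pt_comp (fun z => Rabs (z - fst Q) < e)); auto.
    apply (locally_interval _ _ (fst Q - e) (fst Q + e)); simpl;
      try (apply Rabs_def2 in K1; lra).
    intros y Ha Hb. apply Rabs_def1; simpl in *; lra. }
  assert (L2 : locally t (fun s => Rabs (c2 s - snd Q) < e)).
  { apply (locally_pt_comp (fun z => Rabs (z - snd Q) < e)); auto.
    apply (locally_interval _ _ (snd Q - e) (snd Q + e)); simpl;
      try (apply Rabs_def2 in K2; lra).
    intros y Ha Hb. apply Rabs_def1; simpl in *; lra. }
  generalize (filter_and _ _ L1 L2). apply filter_imp. intros s [a b]. split; auto.
Qed.

Lemma chain2 F Q e c1 c2 t : smooth2_near F Q e -> in_square Q e (c1 t, c2 t) ->
  ex_derive c1 t -> ex_derive c2 t ->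
  is_derive (fun s => F (c1 s, c2 s)) t
    (partial true F (c1 t, c2 t) * Derive c1 t + partial false F (c1 t, c2 t) * Derive c2 t).
Proof.
  intros HF Hin D1 D2.
  set (f := fun x y => F (x, y)).
  assert (Hdiff : differentiable_pt_lim f (c1 t) (c2 t)
     (partial true F (c1 t, c2 t)) (partial false F (c1 t, c2 t))).
  { apply filterdiff_differentiable_pt_lim.
    assert (H := is_derive_filterdiff f (c1 t) (c2 t) (fun u v => partial true F (u, v))
                   (partial false F (c1 t, c2 t))).
    apply H.
    - apply in_square_open in Hin. apply filter_imp with (2 := Hin).
      intros [u v] Huv. simpl. apply Derive_correct.
      exact (proj1 (HF nil (u, v) Huv) true).
    - apply Derive_correct. exact (proj1 (HF nil _ Hin) false).
    - destruct (HF [true] _ Hin) as [_ Hc].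
      eapply filterlim_ext; [| exact Hc]. intros [u v]. reflexivity. }
  apply is_derive_Reals.
  apply (derivable_pt_lim_comp_2d f c1 c2 t). exact Hdiff.
  apply is_derive_Reals, Derive_correct, D1.
  apply is_derive_Reals, Derive_correct, D2.
Qed.

Lemma Cn_cont n f x : (0 < n)%nat -> Cn n f x -> continuity_pt f x.
Proof.
  intros Hn H. apply ex_derive_continuity_pt. apply locally_singleton in H.
  exact (H 0%nat Hn). Qed.

Lemma Cn_comp2 n : forall F Q e c1 c2 t, smooth2_near F Q e ->
  Cn n c1 t -> Cn n c2 t -> in_square Q e (c1 t, c2 t) ->
  Cn n (fun s => F (c1 s, c2 s)) t.
Proof.
  induction n; intros F Q e c1 c2 t HF H1 H2 Hin. apply Cn_0.
  assert (Ls : locally t (fun s => in_square Q e (c1 s, c2 s))).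
  { apply in_square_comp; auto; apply (Cn_cont (S n)); auto; lia. }
  assert (K1 : Cn n c1 t) by (apply (Cn_le n (S n)); [lia|exact H1]).
  assert (K2 : Cn n c2 t) by (apply (Cn_le n (S n)); [lia|exact H2]).
  apply Cn_S in H1 as [D1 E1]; apply Cn_S in H2 as [D2 E2].
  apply Cn_S; split.
  - generalize (filter_and _ _ Ls (filter_and _ _ D1 D2)). apply filter_imp.
    intros s [a [b c]]. eexists. now apply (chain2 F Q e).
  - apply Cn_ext_loc with (fun s => partial true F (c1 s, c2 s) * Derive c1 s
                                   + partial false F (c1 s, c2 s) * Derive c2 s).
    generalize (filter_and _ _ Ls (filter_and _ _ D1 D2)). apply filter_imp.
    intros s [a [b c]]. symmetry. apply is_derive_unique. now apply (chain2 F Q e).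
    apply Cn_plus; apply Cn_mult; auto; apply (IHn _ Q e); auto; now apply smooth2_partial.
Qed.

Lemma V2a m F Q e c1 c2 k : smooth2_near F Q e -> Cn 8 c1 0 -> Cn 8 c2 0 ->
  in_square Q e (c1 0, c2 0) ->
  (forall j, (1 <= j)%nat -> (j < m)%nat -> Derive_n c1 j 0 = 0 /\ Derive_n c2 j 0 = 0) ->
  (1 <= k)%nat -> (k < m)%nat -> (k <= 7)%nat ->
  Derive_n (fun s => F (c1 s, c2 s)) k 0 = 0.
Proof.
  intros HF H1 H2 Hin Hv Hk1 Hk2 Hk3.
  destruct k as [|k]. lia.
  assert (Ls : locally 0 (fun s => in_square Q e (c1 s, c2 s))).
  { apply in_square_comp; auto; apply (Cn_cont 8); auto; lia. }
  assert (K1 := H1); assert (K2 := H2).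
  apply Cn_S in H1 as [D1 E1]; apply Cn_S in H2 as [D2 E2].
  rewrite (Dn_S_loc k _ (fun s => partial true F (c1 s, c2 s) * Derive c1 s
                                   + partial false F (c1 s, c2 s) * Derive c2 s)).
  2:{ generalize (filter_and _ _ Ls (filter_and _ _ D1 D2)). apply filter_imp.
    intros s [a [b c]]. apply is_derive_unique. now apply (chain2 F Q e). }
  assert (C1 : forall b, Cn 7 (fun s => partial b F (c1 s, c2 s)) 0).
  { intro b. apply (Cn_comp2 7 _ Q e); auto; try now apply smooth2_partial.
    apply (Cn_le 7 8); auto. apply (Cn_le 7 8); auto. }
  rewrite Dn_plus.
  2,3: apply Cn_mult; apply (Cn_le k 7); auto; lia.
  rewrite (Van_mult k 0 m), (Van_mult k 0 m); try lia; try ring.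
  all: try (apply (Cn_le k 7); auto; lia).
  all: intros i Hi1 Hi2; rewrite Derive_n_DS; apply Hv; lia.
Qed.

Lemma V2b m F Q e c1 c2 k : smooth2_near F Q e -> Cn 8 c1 0 -> Cn 8 c2 0 ->
  in_square Q e (c1 0, c2 0) ->
  (forall j, (1 <= j)%nat -> (j < m)%nat -> Derive_n c1 j 0 = 0 /\ Derive_n c2 j 0 = 0) ->
  (1 <= m)%nat -> (m <= k)%nat -> (k < 2 * m)%nat -> (k <= 7)%nat ->
  Derive_n (fun s => F (c1 s, c2 s)) k 0 =
  partial true F (c1 0, c2 0) * Derive_n c1 k 0 + partial false F (c1 0, c2 0) * Derive_n c2 k 0.
Proof.
  intros HF H1 H2 Hin Hv Hm Hk1 Hk2 Hk3.
  destruct k as [|k]. lia.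
  assert (Ls : locally 0 (fun s => in_square Q e (c1 s, c2 s))).
  { apply in_square_comp; auto; apply (Cn_cont 8); auto; lia. }
  assert (K1 := H1); assert (K2 := H2).
  apply Cn_S in H1 as [D1 E1]; apply Cn_S in H2 as [D2 E2].
  set (a1 := partial true F (c1 0, c2 0)). set (a2 := partial false F (c1 0, c2 0)).
  rewrite (Dn_S_loc k _ (fun s => ((partial true F (c1 s, c2 s) - a1) * Derive c1 s
                                   + a1 * Derive c1 s) +
                                  ((partial false F (c1 s, c2 s) - a2) * Derive c2 s
                                   + a2 * Derive c2 s))).
  2:{ generalize (filter_and _ _ Ls (filter_and _ _ D1 D2)). apply filter_imp.
    intros s [a [b c]].
    transitivity (partial true F (c1 s, c2 s) * Derive c1 s + partial false F (c1 s, c2 s) * Derive c2 s).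
    apply is_derive_unique, (chain2 F Q e c1 c2 s HF a b c). ring. }
  assert (C1 : forall b, Cn 7 (fun s => partial b F (c1 s, c2 s)) 0).
  { intro b. apply (Cn_comp2 7 _ Q e); auto; try now apply smooth2_partial.
    apply (Cn_le 7 8); auto. apply (Cn_le 7 8); auto. }
  assert (C1' : forall b a, Cn k (fun s => partial b F (c1 s, c2 s) - a) 0).
  { intros b a. apply Cn_minus. apply (Cn_le k 7); auto; lia. apply Cn_const. }
  assert (E1' : Cn k (Derive c1) 0) by (apply (Cn_le k 7); auto; lia).
  assert (E2' : Cn k (Derive c2) 0) by (apply (Cn_le k 7); auto; lia).
  rewrite Dn_plus, Dn_plus, Dn_plus, !Derive_n_scal_l, !Derive_n_DS.
  2: exact (Cn_mult _ _ _ _ (C1' false a2) E2').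
  2: exact (Cn_scal _ a2 _ _ E2').
  2: exact (Cn_mult _ _ _ _ (C1' true a1) E1').
  2: exact (Cn_scal _ a1 _ _ E1').
  2: exact (Cn_plus _ _ _ _ (Cn_mult _ _ _ _ (C1' true a1) E1') (Cn_scal _ a1 _ _ E1')).
  2: exact (Cn_plus _ _ _ _ (Cn_mult _ _ _ _ (C1' false a2) E2') (Cn_scal _ a2 _ _ E2')).
  assert (Z : forall b c (Hc : forall j, (1 <= j)%nat -> (j < m)%nat -> Derive_n c j 0 = 0),
             Cn k (Derive c) 0 ->
             Derive_n (fun s => (partial b F (c1 s, c2 s) - partial b F (c1 0, c2 0)) * Derive c s) k 0 = 0).
  { intros b c Hc Ec.
    apply (Van_mult k m (pred m) _ _ 0 ltac:(lia) (C1' b _) Ec).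
    - intros i Hi1 Hi2. destruct i. simpl. ring.
      rewrite Dn_minus, Derive_n_const. 2: apply (Cn_le (S i) 7); auto; lia.
      2: apply Cn_const.
      rewrite (V2a m (partial b F) Q e c1 c2 (S i)); auto; try lia. ring.
      now apply smooth2_partial.
    - intros i Hi1 Hi2. rewrite Derive_n_DS. apply Hc; lia. }
  unfold a1, a2. rewrite (Z true c1), (Z false c2); auto; try ring.
  all: intros j Hj1 Hj2; apply Hv; auto.
Qed.

Lemma smooth_near_Cinf f c e x : smooth1_near f c e -> Rabs (x - c) < e -> Cinf f x.
Proof.
  intros H Hx n. unfold Cn.
  apply (locally_interval _ _ (c - e) (c + e)); simpl; try (apply Rabs_def2 in Hx; lra).
  intros y Ha Hb k Hk. apply H. apply Rabs_def1; simpl in *; lra. Qed.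

Lemma smooth_int_Cinf f a b x : smooth1_on_interval f a b -> a < x < b -> Cinf f x.
Proof.
  intros H Hx n. unfold Cn.
  apply (locally_interval _ _ a b); simpl; try lra.
  intros y Ha Hb k Hk. apply H. simpl in *; lra. Qed.

Definition TL (f : R -> R) : list R :=
  [Derive_n f 0 0 / INR (fact 0); Derive_n f 1 0 / INR (fact 1); Derive_n f 2 0 / INR (fact 2);
   Derive_n f 3 0 / INR (fact 3); Derive_n f 4 0 / INR (fact 4); Derive_n f 5 0 / INR (fact 5);
   Derive_n f 6 0 / INR (fact 6); Derive_n f 7 0 / INR (fact 7)].

Lemma tay7_TL f : tay7 f = TL f.
Proof. reflexivity. Qed.

Definition cf (f : R -> R) (k : nat) := Derive_n f k 0 / INR (fact k).

Lemma pow4_jet (f : R -> R) k : Cn 8 f 0 -> (k <= 7)%nat ->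
  Derive_n (fun s => f s ^ 4) k 0 =
  INR (fact k) * nth k (pmul (TL f) (pmul (TL f) (pmul (TL f) (TL f)))) 0.
Proof.
  intros Hf Hk. rewrite <- Dn_peval0.
  rewrite (Derive_n_ext _ (fun s => f s * (f s * (f s * f s)))) by (intro; ring).
  set (p := TL f).
  rewrite (Derive_n_ext (peval _) (fun s => peval p s * (peval p s * (peval p s * peval p s))))
    by (intro; rewrite !peval_pmul; ring).
  assert (Hf7 : Cn 7 f 0) by (apply (Cn_le 7 8); auto).
  assert (J := JetEq_tay7 f). rewrite tay7_TL in J. fold p in J.
  assert (P := Cn_peval 7 p 0).
  assert (F2 := Cn_mult _ _ _ _ Hf7 Hf7). assert (F3 := Cn_mult _ _ _ _ Hf7 F2).
  assert (P2 := Cn_mult _ _ _ _ P P). assert (P3 := Cn_mult _ _ _ _ P P2).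
  assert (J2 := JetEq_mult _ _ _ _ _ _ Hf7 Hf7 P P J J).
  assert (J3 := JetEq_mult _ _ _ _ _ _ Hf7 F2 P P2 J J2).
  assert (J4 := JetEq_mult _ _ _ _ _ _ Hf7 F3 P P3 J J3).
  exact (J4 k Hk).
Qed.

Lemma pow5_jet (f : R -> R) k : Cn 8 f 0 -> (k <= 7)%nat ->
  Derive_n (fun s => f s ^ 5) k 0 =
  INR (fact k) * nth k (pmul (TL f) (pmul (TL f) (pmul (TL f) (pmul (TL f) (TL f))))) 0.
Proof.
  intros Hf Hk. rewrite <- Dn_peval0.
  rewrite (Derive_n_ext _ (fun s => f s * (f s * (f s * (f s * f s))))) by (intro; ring).
  set (p := TL f).
  rewrite (Derive_n_ext (peval _) (fun s => peval p s * (peval p s * (peval p s * (peval p s * peval p s)))))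
    by (intro; rewrite !peval_pmul; ring).
  assert (Hf7 : Cn 7 f 0) by (apply (Cn_le 7 8); auto).
  assert (J := JetEq_tay7 f). rewrite tay7_TL in J. fold p in J.
  assert (P := Cn_peval 7 p 0).
  assert (F2 := Cn_mult _ _ _ _ Hf7 Hf7). assert (F3 := Cn_mult _ _ _ _ Hf7 F2).
  assert (F4 := Cn_mult _ _ _ _ Hf7 F3).
  assert (P2 := Cn_mult _ _ _ _ P P). assert (P3 := Cn_mult _ _ _ _ P P2).
  assert (P4 := Cn_mult _ _ _ _ P P3).
  assert (J2 := JetEq_mult _ _ _ _ _ _ Hf7 Hf7 P P J J).
  assert (J3 := JetEq_mult _ _ _ _ _ _ Hf7 F2 P P2 J J2).
  assert (J4 := JetEq_mult _ _ _ _ _ _ Hf7 F3 P P3 J J3).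
  assert (J5 := JetEq_mult _ _ _ _ _ _ Hf7 F4 P P4 J J4).
  exact (J5 k Hk).
Qed.

Lemma TL_eq f : f 0 = 0 -> TL f = [0; cf f 1; cf f 2; cf f 3; cf f 4; cf f 5; cf f 6; cf f 7].
Proof. intro H. unfold TL, cf. simpl Derive_n at 1. rewrite H. f_equal. simpl. field. Qed.

Lemma INR_fact k : INR (fact k) = IZR (Z.of_nat (fact k)).
Proof. apply INR_IZR_INZ. Qed.

Lemma pow4_vals f : Cn 8 f 0 -> f 0 = 0 ->
  Derive_n (fun s => f s ^ 4) 1 0 = 0 /\ Derive_n (fun s => f s ^ 4) 2 0 = 0 /\
  Derive_n (fun s => f s ^ 4) 3 0 = 0 /\
  Derive_n (fun s => f s ^ 4) 4 0 = 24 * cf f 1 ^ 4 /\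
  Derive_n (fun s => f s ^ 4) 5 0 = 120 * (4 * cf f 1 ^ 3 * cf f 2) /\
  Derive_n (fun s => f s ^ 4) 6 0 = 720 * (4 * cf f 1 ^ 3 * cf f 3 + 6 * cf f 1 ^ 2 * cf f 2 ^ 2) /\
  Derive_n (fun s => f s ^ 4) 7 0 = 5040 * (4 * cf f 1 ^ 3 * cf f 4 + 12 * cf f 1 ^ 2 * cf f 2 * cf f 3 + 4 * cf f 1 * cf f 2 ^ 3).
Proof.
  intros Hf H0. rewrite !pow4_jet by (auto; lia). rewrite TL_eq by auto.
  rewrite !INR_fact.
  repeat split; cbn -[Rplus Rmult cf IZR]; ring.
Qed.

Lemma pow5_vals f : Cn 8 f 0 -> f 0 = 0 ->
  Derive_n (fun s => f s ^ 5) 1 0 = 0 /\ Derive_n (fun s => f s ^ 5) 2 0 = 0 /\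
  Derive_n (fun s => f s ^ 5) 3 0 = 0 /\ Derive_n (fun s => f s ^ 5) 4 0 = 0 /\
  Derive_n (fun s => f s ^ 5) 5 0 = 120 * cf f 1 ^ 5 /\
  Derive_n (fun s => f s ^ 5) 6 0 = 720 * (5 * cf f 1 ^ 4 * cf f 2) /\
  Derive_n (fun s => f s ^ 5) 7 0 = 5040 * (5 * cf f 1 ^ 4 * cf f 3 + 10 * cf f 1 ^ 3 * cf f 2 ^ 2).
Proof.
  intros Hf H0. rewrite !pow5_jet by (auto; lia). rewrite TL_eq by auto.
  rewrite !INR_fact.
  repeat split; cbn -[Rplus Rmult cf IZR]; ring.
Qed.

Lemma Cn_pow n m f x : Cn n f x -> Cn n (fun y => f y ^ m) x.
Proof.
  intro H. induction m.
  - apply (Cn_ext_loc n (fun _ => 1)). apply filter_forall. intros; reflexivity. apply Cn_const.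
  - apply (Cn_ext_loc n (fun y => f y * f y ^ m)). apply filter_forall. intros; reflexivity.
    exact (Cn_mult _ _ _ _ H IHm). Qed.


Lemma diffeo1_deriv phi : diffeo1_germ phi 0 -> Cinf phi 0 /\ Derive phi 0 <> 0.
Proof.
  intros [e [chi [He [Hp [Hc [H1 H2]]]]]].
  assert (Cp : Cinf phi 0) by (apply (smooth_near_Cinf phi 0 e); auto; rewrite Rminus_0_r, Rabs_R0; lra).
  assert (Cc : Cinf chi (phi 0)) by (apply (smooth_near_Cinf chi (phi 0) e); auto; rewrite Rminus_eq_0, Rabs_R0; lra).
  split; auto.
  assert (Dp : ex_derive phi 0) by (assert (X := Cp 1%nat); apply locally_singleton in X; exact (X 0%nat ltac:(lia))).
  assert (Dc : ex_derive chi (phi 0)) by (assert (X := Cc 1%nat); apply locally_singleton in X; exact (X 0%nat ltac:(lia))).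
  assert (E : Derive (fun s => chi (phi s)) 0 = 1).
  { rewrite (Derive_ext_loc _ (fun s => s)). apply (Derive_id 0).
    apply (locally_interval _ _ (-e) e); simpl; try lra.
    intros y Ha Hb. apply H1. apply Rabs_def1; simpl in *; lra. }
  rewrite Derive_comp in E; auto. intro Z. rewrite Z in E. lra.
Qed.

Lemma lin_cancel a11 a12 a21 a22 x y : a11 * a22 - a12 * a21 <> 0 ->
  a11 * x + a12 * y = 0 -> a21 * x + a22 * y = 0 -> x = 0 /\ y = 0.
Proof.
  intros D E1 E2.
  assert (X : (a11 * a22 - a12 * a21) * x = a22 * (a11 * x + a12 * y) - a12 * (a21 * x + a22 * y)) by ring.
  rewrite E1, E2 in X.
  assert (Y : (a11 * a22 - a12 * a21) * y = a11 * (a21 * x + a22 * y) - a21 * (a11 * x + a12 * y)) by ring.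
  rewrite E1, E2 in Y.
  split; apply (Rmult_eq_reg_l (a11 * a22 - a12 * a21)); auto; lra.
Qed.

Lemma lineD (G : R * R -> R) Qc e (c1 c2 v : R -> R) (t0 dv : R) : is_derive v t0 dv ->
  smooth2_near G Qc e -> in_square Qc e (c1 t0, c2 t0) -> ex_derive c1 t0 -> ex_derive c2 t0 ->
  locally t0 (fun t => G (c1 t, c2 t) = v t) ->
  partial true G (c1 t0, c2 t0) * Derive c1 t0 + partial false G (c1 t0, c2 t0) * Derive c2 t0 = dv.
Proof.
  intros Hv HG Hin D1 D2 Hl.
  assert (K1 := chain2 G Qc e c1 c2 t0 HG Hin D1 D2).
  assert (K2 : is_derive (fun t => G (c1 t, c2 t)) t0 dv).
  { apply (is_derive_ext_loc v). apply filter_imp with (2 := Hl). intros; auto. exact Hv. }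
  apply eq_trans with (Derive (fun t => G (c1 t, c2 t)) t0).
  symmetry; apply is_derive_unique; exact K1. apply is_derive_unique; exact K2. Qed.

Lemma diffeo2_det psi q1 q2 : diffeo2_germ psi (q1, q2) ->
  exists e, 0 < e /\ smooth2_near (fun p => fst (psi p)) (q1, q2) e /\ smooth2_near (fun p => snd (psi p)) (q1, q2) e /\ (partial true (fun p => fst (psi p)) (q1, q2) * partial false (fun p => snd (psi p)) (q1, q2)
    - partial false (fun p => fst (psi p)) (q1, q2) * partial true (fun p => snd (psi p)) (q1, q2) <> 0).
Proof.
  intros [e [chi [He [[S1 S2] [[T1 T2] [H1 H2]]]]]].
  exists e; split; auto; split; auto; split; auto.
  assert (Hq : in_square (q1, q2) e (q1, q2)) by (split; simpl; rewrite Rminus_eq_0, Rabs_R0; lra).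
  assert (Hin : in_square (psi (q1, q2)) e (fst (psi (q1, q2)), snd (psi (q1, q2)))).
  { split; simpl; rewrite Rminus_eq_0, Rabs_R0; lra. }
  assert (Ex : forall b F, smooth2_near F (q1, q2) e -> ex_partial b F (q1, q2)).
  { intros b F HF. exact (proj1 (HF nil _ Hq) b). }
  assert (LocX : locally q1 (fun t => chi (psi (t, q2)) = (t, q2))).
  { apply (locally_interval _ _ (q1 - e) (q1 + e)); simpl; try lra.
    intros y Ha Hb. apply H1. split; simpl; [apply Rabs_def1; simpl in *; lra|rewrite Rminus_eq_0, Rabs_R0; lra]. }
  assert (LocY : locally q2 (fun t => chi (psi (q1, t)) = (q1, t))).
  { apply (locally_interval _ _ (q2 - e) (q2 + e)); simpl; try lra.
    intros y Ha Hb. apply H1. split; simpl; [rewrite Rminus_eq_0, Rabs_R0; lra|apply Rabs_def1; simpl in *; lra]. }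
  assert (E11 := lineD (fun p => fst (chi p)) (psi (q1, q2)) e
     (fun t => fst (psi (t, q2))) (fun t => snd (psi (t, q2))) (fun t => t) q1 1
     (@is_derive_id R_AbsRing q1) T1 Hin (Ex true _ S1) (Ex true _ S2)).
  assert (E21 := lineD (fun p => snd (chi p)) (psi (q1, q2)) e
     (fun t => fst (psi (t, q2))) (fun t => snd (psi (t, q2))) (fun t => q2) q1 0
     (is_derive_const q2 q1) T2 Hin (Ex true _ S1) (Ex true _ S2)).
  assert (E12 := lineD (fun p => fst (chi p)) (psi (q1, q2)) e
     (fun t => fst (psi (q1, t))) (fun t => snd (psi (q1, t))) (fun t => q1) q2 0
     (is_derive_const q1 q2) T1 Hin (Ex false _ S1) (Ex false _ S2)).
  assert (E22 := lineD (fun p => snd (chi p)) (psi (q1, q2)) e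
     (fun t => fst (psi (q1, t))) (fun t => snd (psi (q1, t))) (fun t => t) q2 1
     (@is_derive_id R_AbsRing q2) T2 Hin (Ex false _ S1) (Ex false _ S2)).
  assert (A1 : locally q1 (fun t => fst (chi (fst (psi (t, q2)), snd (psi (t, q2)))) = t)).
  { apply filter_imp with (2 := LocX). intros t Ht. rewrite <- surjective_pairing, Ht. reflexivity. }
  assert (A2 : locally q1 (fun t => snd (chi (fst (psi (t, q2)), snd (psi (t, q2)))) = q2)).
  { apply filter_imp with (2 := LocX). intros t Ht. rewrite <- surjective_pairing, Ht. reflexivity. }
  assert (A3 : locally q2 (fun t => fst (chi (fst (psi (q1, t)), snd (psi (q1, t)))) = q1)).
  { apply filter_imp with (2 := LocY). intros t Ht. rewrite <- surjective_pairing, Ht. reflexivity. }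
  assert (A4 : locally q2 (fun t => snd (chi (fst (psi (q1, t)), snd (psi (q1, t)))) = t)).
  { apply filter_imp with (2 := LocY). intros t Ht. rewrite <- surjective_pairing, Ht. reflexivity. }
  specialize (E11 A1); specialize (E21 A2); specialize (E12 A3); specialize (E22 A4).
  cbv beta in E11, E12, E21, E22.
  set (b11 := partial true (fun p => fst (chi p)) (fst (psi (q1, q2)), snd (psi (q1, q2)))) in *.
  set (b12 := partial false (fun p => fst (chi p)) (fst (psi (q1, q2)), snd (psi (q1, q2)))) in *.
  set (b21 := partial true (fun p => snd (chi p)) (fst (psi (q1, q2)), snd (psi (q1, q2)))) in *.
  set (b22 := partial false (fun p => snd (chi p)) (fst (psi (q1, q2)), snd (psi (q1, q2)))) in *.
  set (a11 := Derive (fun t => fst (psi (t, q2))) q1) in *.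
  set (a21 := Derive (fun t => snd (psi (t, q2))) q1) in *.
  set (a12 := Derive (fun t => fst (psi (q1, t))) q2) in *.
  set (a22 := Derive (fun t => snd (psi (q1, t))) q2) in *.
  change (a11 * a22 - a12 * a21 <> 0). intro Z.
  assert (W : (b11 * b22 - b12 * b21) * (a11 * a22 - a12 * a21) = 1).
  { transitivity ((b11 * a11 + b12 * a21) * (b21 * a12 + b22 * a22) - (b11 * a12 + b12 * a22) * (b21 * a11 + b22 * a21)).
    ring. rewrite E11, E12, E21, E22. ring. }
  rewrite Z in W. lra.
Qed.

Lemma alg_rev a11 a12 a21 a22 x4 y4 x5 y5 x6 y6 x7 y7 c1 c2 c3 c4 :
  a11 * a22 - a12 * a21 <> 0 -> c1 <> 0 ->
  a11 * x4 + a12 * y4 = 24 * c1 ^ 4 -> a21 * x4 + a22 * y4 = 0 ->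
  a11 * x5 + a12 * y5 = 120 * (4 * c1 ^ 3 * c2) -> a21 * x5 + a22 * y5 = 120 * c1 ^ 5 ->
  a11 * x6 + a12 * y6 = 720 * (4 * c1 ^ 3 * c3 + 6 * c1 ^ 2 * c2 ^ 2) ->
  a21 * x6 + a22 * y6 = 720 * (5 * c1 ^ 4 * c2) ->
  a11 * x7 + a12 * y7 = 5040 * (4 * c1 ^ 3 * c4 + 12 * c1 ^ 2 * c2 * c3 + 4 * c1 * c2 ^ 3) ->
  a21 * x7 + a22 * y7 = 5040 * (5 * c1 ^ 4 * c3 + 10 * c1 ^ 3 * c2 ^ 2) ->
  x5 * y4 - y5 * x4 <> 0 /\
  -77 * (x6 * y4 - y6 * x4) ^ 2 + 105 * (x5 * y4 - y5 * x4) * (x6 * y5 - y6 * x5)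
    + 60 * (x5 * y4 - y5 * x4) * (x7 * y4 - y7 * x4) = 0.
Proof.
  intros HD Hc E4 F4 E5 F5 E6 F6 E7 F7.
  set (D := a11 * a22 - a12 * a21) in *.
  assert (KA : D * (x5 * y4 - y5 * x4) =
     (a11 * x5 + a12 * y5) * (a21 * x4 + a22 * y4) - (a21 * x5 + a22 * y5) * (a11 * x4 + a12 * y4))
    by (unfold D; ring).
  rewrite E4, F4, E5, F5 in KA.
  split.
  - intro Z. rewrite Z, Rmult_0_r in KA.
    assert (c1 ^ 9 <> 0) by (apply pow_nonzero; auto). nra.
  - assert (KB : D * (x6 * y4 - y6 * x4) =
     (a11 * x6 + a12 * y6) * (a21 * x4 + a22 * y4) - (a21 * x6 + a22 * y6) * (a11 * x4 + a12 * y4))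
      by (unfold D; ring).
    assert (KC : D * (x7 * y4 - y7 * x4) =
     (a11 * x7 + a12 * y7) * (a21 * x4 + a22 * y4) - (a21 * x7 + a22 * y7) * (a11 * x4 + a12 * y4))
      by (unfold D; ring).
    assert (KD : D * (x6 * y5 - y6 * x5) =
     (a11 * x6 + a12 * y6) * (a21 * x5 + a22 * y5) - (a21 * x6 + a22 * y6) * (a11 * x5 + a12 * y5))
      by (unfold D; ring).
    rewrite E4, F4, E6, F6 in KB. rewrite E4, F4, E7, F7 in KC. rewrite E5, F5, E6, F6 in KD.
    apply (Rmult_eq_reg_l (D ^ 2)). 2: now apply pow_nonzero.
    rewrite Rmult_0_r.
    transitivity (-77 * (D * (x6 * y4 - y6 * x4)) ^ 2 + 105 * (D * (x5 * y4 - y5 * x4)) * (D * (x6 * y5 - y6 * x5))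
       + 60 * (D * (x5 * y4 - y5 * x4)) * (D * (x7 * y4 - y7 * x4))). ring.
    rewrite KA, KB, KC, KD. ring.
Qed.

Lemma reverse_dir (a b : R) (gamma : R -> R * R) :
  a < 0 < b ->
  smooth1_on_interval (fun t => fst (gamma t)) a b ->
  smooth1_on_interval (fun t => snd (gamma t)) a b ->
  (exists (h : R -> R * R) (e : R),
     0 < e /\ curve_smooth_near h 0 e /\
     (forall k : nat, (k <= 7)%nat -> dn h k 0 = (0, 0)) /\
     A_equivalent_at0 gamma (fun s => (s ^ 4 + fst (h s), s ^ 5 + snd (h s)))) ->
  (dn gamma 1 0 = (0, 0) /\ dn gamma 2 0 = (0, 0) /\ dn gamma 3 0 = (0, 0) /\
    coefA gamma <> 0 /\
    -77 * (coefB gamma) ^ 2 + 105 * coefA gamma * coefD gamma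
      + 60 * coefA gamma * coefC gamma = 0).
Proof.
  intros Hab Sg1 Sg2 [h [eh [Heh [[Sh1 Sh2] [Hh0 [phi [psi [e' [Hphi0 [Hpsi0 [Dphi [Dpsi [He' Heq]]]]]]]]]]]]].
  set (g1 := fun t => fst (gamma t)) in *. set (g2 := fun t => snd (gamma t)) in *.
  assert (Cg1 : Cn 8 g1 0) by (apply (smooth_int_Cinf g1 a b); auto; lra).
  assert (Cg2 : Cn 8 g2 0) by (apply (smooth_int_Cinf g2 a b); auto; lra).
  destruct (diffeo1_deriv phi Dphi) as [Cphi Dphi0].
  assert (Cphi8 := Cphi 8%nat).
  remember (gamma 0) as Q eqn:EQ. destruct Q as [q1 q2].
  assert (G1 : g1 0 = q1) by (unfold g1; rewrite <- EQ; reflexivity).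
  assert (G2 : g2 0 = q2) by (unfold g2; rewrite <- EQ; reflexivity).
  destruct (diffeo2_det psi q1 q2 Dpsi) as [e2 [He2 [S1 [S2 Det]]]].
  set (P1 := fun p => fst (psi p)) in *. set (P2 := fun p => snd (psi p)) in *.
  assert (Hin : in_square (q1, q2) e2 (g1 0, g2 0)).
  { rewrite G1, G2. split; simpl; rewrite Rminus_eq_0, Rabs_R0; lra. }
  set (h1 := fun s => fst (h s)). set (h2 := fun s => snd (h s)).
  assert (Ch1 : Cn 8 h1 (phi 0)) by (rewrite Hphi0; apply (smooth_near_Cinf h1 0 eh); auto; rewrite Rminus_0_r, Rabs_R0; lra).
  assert (Ch2 : Cn 8 h2 (phi 0)) by (rewrite Hphi0; apply (smooth_near_Cinf h2 0 eh); auto; rewrite Rminus_0_r, Rabs_R0; lra).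
  assert (Vh1 : forall k, (k <= 7)%nat -> (k < 8)%nat -> Derive_n h1 k (phi 0) = 0).
  { intros k Hk _. rewrite Hphi0. exact (f_equal fst (Hh0 k Hk)). }
  assert (Vh2 : forall k, (k <= 7)%nat -> (k < 8)%nat -> Derive_n h2 k (phi 0) = 0).
  { intros k Hk _. rewrite Hphi0. exact (f_equal snd (Hh0 k Hk)). }
  assert (Loc : locally 0 (fun s => Rabs s < e')).
  { apply (locally_interval _ _ (-e') e'); simpl; try lra. intros y Ha Hb. apply Rabs_def1; simpl in *; lra. }
  assert (RH1 : forall k, (k <= 7)%nat -> Derive_n (fun s => P1 (g1 s, g2 s)) k 0 =
                  Derive_n (fun s => phi s ^ 4) k 0).
  { intros k Hk.
    assert (C4 : Cn 8 (fun s => phi s ^ 4) 0) by (apply Cn_pow; auto).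
    assert (Ch : Cn 8 (fun s => h1 (phi s)) 0) by (apply Cn_comp; auto).
    transitivity (Derive_n (fun s => phi s ^ 4 + h1 (phi s)) k 0).
    2:{
    rewrite (Dn_plus k _ _ 0 (Cn_le k 8 _ _ ltac:(lia) C4) (Cn_le k 8 _ _ ltac:(lia) Ch)).
    rewrite (Van_comp 7 8 h1 phi 0 (Cn_le 7 8 _ _ ltac:(lia) Ch1) (Cn_le 7 8 _ _ ltac:(lia) Cphi8) Vh1 k Hk ltac:(lia)). ring. }
    apply Derive_n_ext_loc.
    apply filter_imp with (2 := Loc). intros s Hs. unfold P1, g1, g2, h1.
    rewrite <- surjective_pairing, Heq; auto. }
  assert (RH2 : forall k, (k <= 7)%nat -> Derive_n (fun s => P2 (g1 s, g2 s)) k 0 =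
                  Derive_n (fun s => phi s ^ 5) k 0).
  { intros k Hk.
    assert (C4 : Cn 8 (fun s => phi s ^ 5) 0) by (apply Cn_pow; auto).
    assert (Ch : Cn 8 (fun s => h2 (phi s)) 0) by (apply Cn_comp; auto).
    transitivity (Derive_n (fun s => phi s ^ 5 + h2 (phi s)) k 0).
    2:{
    rewrite (Dn_plus k _ _ 0 (Cn_le k 8 _ _ ltac:(lia) C4) (Cn_le k 8 _ _ ltac:(lia) Ch)).
    rewrite (Van_comp 7 8 h2 phi 0 (Cn_le 7 8 _ _ ltac:(lia) Ch2) (Cn_le 7 8 _ _ ltac:(lia) Cphi8) Vh2 k Hk ltac:(lia)). ring. }
    apply Derive_n_ext_loc.
    apply filter_imp with (2 := Loc). intros s Hs. unfold P2, g1, g2, h2.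
    rewrite <- surjective_pairing, Heq; auto. }
  destruct (pow4_vals phi Cphi8 Hphi0) as [A1 [A2 [A3 [A4 [A5 [A6 A7]]]]]].
  destruct (pow5_vals phi Cphi8 Hphi0) as [B1 [B2 [B3 [B4 [B5 [B6 B7]]]]]].
  assert (LH : forall m k, (forall j, (1 <= j)%nat -> (j < m)%nat -> Derive_n g1 j 0 = 0 /\ Derive_n g2 j 0 = 0) ->
     (1 <= m)%nat -> (m <= k)%nat -> (k < 2 * m)%nat -> (k <= 7)%nat ->
     Derive_n (fun s => P1 (g1 s, g2 s)) k 0 = partial true P1 (q1, q2) * Derive_n g1 k 0 + partial false P1 (q1, q2) * Derive_n g2 k 0 /\
     Derive_n (fun s => P2 (g1 s, g2 s)) k 0 = partial true P2 (q1, q2) * Derive_n g1 k 0 + partial false P2 (q1, q2) * Derive_n g2 k 0).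
  { intros m k Hv Hm Hk1 Hk2 Hk3. rewrite <- G1, <- G2.
    split; apply (V2b m _ (q1, q2) e2); auto; rewrite G1, G2; auto. }
  set (a11 := partial true P1 (q1, q2)) in *. set (a12 := partial false P1 (q1, q2)) in *.
  set (a21 := partial true P2 (q1, q2)) in *. set (a22 := partial false P2 (q1, q2)) in *.
  assert (Z1 : Derive_n g1 1 0 = 0 /\ Derive_n g2 1 0 = 0).
  { assert (Hv : forall j, (1 <= j)%nat -> (j < 1)%nat -> Derive_n g1 j 0 = 0 /\ Derive_n g2 j 0 = 0) by (intros; lia).
    destruct (LH 1%nat 1%nat Hv ltac:(lia) ltac:(lia) ltac:(lia) ltac:(lia)) as [L1 L2].
    rewrite RH1, A1 in L1 by lia. rewrite RH2, B1 in L2 by lia.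
    apply (lin_cancel a11 a12 a21 a22); auto. }
  assert (Z2 : Derive_n g1 2 0 = 0 /\ Derive_n g2 2 0 = 0).
  { assert (Hv : forall j, (1 <= j)%nat -> (j < 2)%nat -> Derive_n g1 j 0 = 0 /\ Derive_n g2 j 0 = 0).
    { intros j Hj1 Hj2. replace j with 1%nat by lia. auto. }
    destruct (LH 2%nat 2%nat Hv ltac:(lia) ltac:(lia) ltac:(lia) ltac:(lia)) as [L1 L2].
    rewrite RH1, A2 in L1 by lia. rewrite RH2, B2 in L2 by lia.
    apply (lin_cancel a11 a12 a21 a22); auto. }
  assert (Z3 : Derive_n g1 3 0 = 0 /\ Derive_n g2 3 0 = 0).
  { assert (Hv : forall j, (1 <= j)%nat -> (j < 3)%nat -> Derive_n g1 j 0 = 0 /\ Derive_n g2 j 0 = 0).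
    { intros j Hj1 Hj2. destruct j as [|[|[|]]]; try lia; auto. }
    destruct (LH 3%nat 3%nat Hv ltac:(lia) ltac:(lia) ltac:(lia) ltac:(lia)) as [L1 L2].
    rewrite RH1, A3 in L1 by lia. rewrite RH2, B3 in L2 by lia.
    apply (lin_cancel a11 a12 a21 a22); auto. }
  assert (V4 : forall j, (1 <= j)%nat -> (j < 4)%nat -> Derive_n g1 j 0 = 0 /\ Derive_n g2 j 0 = 0).
  { intros j Hj1 Hj2. destruct j as [|[|[|[|]]]]; try lia; auto. }
  destruct (LH 4%nat 4%nat V4 ltac:(lia) ltac:(lia) ltac:(lia) ltac:(lia)) as [L41 L42].
  destruct (LH 4%nat 5%nat V4 ltac:(lia) ltac:(lia) ltac:(lia) ltac:(lia)) as [L51 L52].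
  destruct (LH 4%nat 6%nat V4 ltac:(lia) ltac:(lia) ltac:(lia) ltac:(lia)) as [L61 L62].
  destruct (LH 4%nat 7%nat V4 ltac:(lia) ltac:(lia) ltac:(lia) ltac:(lia)) as [L71 L72].
  rewrite RH1 in L41, L51, L61, L71 by lia. rewrite RH2 in L42, L52, L62, L72 by lia.
  rewrite A4 in L41; rewrite A5 in L51; rewrite A6 in L61; rewrite A7 in L71.
  rewrite B4 in L42; rewrite B5 in L52; rewrite B6 in L62; rewrite B7 in L72.
  assert (Hc1 : cf phi 1 <> 0).
  { unfold cf. simpl. unfold Rdiv. rewrite Rinv_1, Rmult_1_r. exact Dphi0. }
  destruct (alg_rev a11 a12 a21 a22 _ _ _ _ _ _ _ _ _ _ _ _ Det Hc1
     (eq_sym L41) (eq_sym L42) (eq_sym L51) (eq_sym L52) (eq_sym L61) (eq_sym L62) (eq_sym L71) (eq_sym L72))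
    as [RA RQ].
  unfold coefA, coefB, coefC, coefD, det2, dn. simpl fst; simpl snd.
  fold g1 g2.
  destruct Z1 as [-> ->]; destruct Z2 as [-> ->]; destruct Z3 as [-> ->].
  repeat split; auto.

Qed.

Lemma Cinf_all_Derive f : (forall n x, Cn n f x) -> forall n x, Cn n (Derive f) x.
Proof. intros H n x. destruct (proj1 (Cn_S n f x) (H (S n) x)) as [_ K]. exact K. Qed.

Lemma Cinf_all_exd f : (forall n x, Cn n f x) -> forall x, ex_derive f x.
Proof. intros H x. assert (K := H 1%nat x). apply locally_singleton in K. exact (K 0%nat ltac:(lia)). Qed.

Lemma ift (f : R -> R) : (forall n x, Cn n f x) -> f 0 = 0 -> Derive f 0 = 1 ->
  exists e chi, 0 < e /\ (forall x, Rabs x < e -> chi (f x) = x) /\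
    (forall y, Rabs y < e -> f (chi y) = y) /\ (forall y, Rabs y < e -> Cinf chi y).
Proof.
  intros Hf H0 H1.
  assert (Hd := Cinf_all_exd f Hf).
  assert (Hdd := Cinf_all_exd (Derive f) (Cinf_all_Derive f Hf)).
  assert (Hc : continuity_pt (Derive f) 0) by (apply ex_derive_continuity_pt; auto).
  destruct (Hc (1/2) ltac:(lra)) as [alp [Halp Hal]].
  set (d := alp / 2).
  assert (Hdpos : 0 < d) by (unfold d; lra).
  assert (Dpos : forall x, Rabs x <= d -> Derive f x > 1/2).
  { intros x Hx. destruct (Req_dec x 0) as [->|Hx0]. lra.
    assert (K := Hal x). simpl in K. unfold R_dist in K. rewrite H1 in K.
    assert (K' : Rabs (Derive f x - 1) < 1/2).
    { apply K. split. split. constructor. auto. rewrite Rminus_0_r. unfold d in Hx. lra. }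
    apply Rabs_def2 in K'. lra. }
  assert (Lim : forall c, derivable_pt_lim f c (Derive f c)).
  { intro c. apply is_derive_Reals. apply Derive_correct. auto. }
  assert (Mono : forall x y, -d <= x -> x < y -> y <= d -> f y - f x >= (y - x) / 2).
  { intros x y Hx Hxy Hy. destruct (MVT_cor2 f (Derive f) x y Hxy (fun c _ => Lim c)) as [c [Hc1 Hc2]].
    assert (Derive f c > 1/2) by (apply Dpos; apply Rabs_le; lra). nra. }
  assert (Inj : forall x y, Rabs x <= d -> Rabs y <= d -> f x = f y -> x = y).
  { intros x y Hx Hy E. apply Rabs_le_between in Hx. apply Rabs_le_between in Hy.
    destruct (Rtotal_order x y) as [L|[L|L]]; auto.
    - assert (K := Mono x y ltac:(lra) L ltac:(lra)). lra.
    - assert (K := Mono y x ltac:(lra) L ltac:(lra)). lra. }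
  set (e := d / 2).
  assert (Hcont : continuity f).
  { intro x. apply ex_derive_continuity_pt. auto. }
  set (chi := fun y => epsilon (inhabits 0) (fun x => Rabs x <= d /\ f x = y)).
  assert (Spec : forall y, Rabs y < e -> Rabs (chi y) <= d /\ f (chi y) = y).
  { intros y Hy. apply epsilon_spec. apply Rabs_def2 in Hy.
    assert (F1 := Mono (-d) 0 ltac:(lra) ltac:(lra) ltac:(lra)).
    assert (F2 := Mono 0 d ltac:(lra) ltac:(lra) ltac:(lra)).
    destruct (IVT (fun x => f x - y) (-d) d) as [z [Hz1 Hz2]].
    - intro x. apply continuity_pt_minus. apply Hcont. apply continuity_pt_const. intros u v; auto.
    - lra.
    - unfold e in Hy. lra.
    - unfold e in Hy. lra.
    - exists z. split. apply Rabs_le; lra. lra. }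
  assert (Inv1 : forall x, Rabs x <= d -> Rabs (chi (f x)) <= d /\ chi (f x) = x).
  { intros x Hx. assert (S : Rabs (chi (f x)) <= d /\ f (chi (f x)) = f x).
    { apply epsilon_spec. exists x. auto. }
    split. apply S. apply Inj; auto; apply S. }
  assert (Lip : forall y1 y2, Rabs y1 < e -> Rabs y2 < e -> Rabs (chi y1 - chi y2) <= 2 * Rabs (y1 - y2)).
  { intros y1 y2 Hy1 Hy2. destruct (Spec y1 Hy1) as [A1 B1]. destruct (Spec y2 Hy2) as [A2 B2].
    apply Rabs_le_between in A1. apply Rabs_le_between in A2.
    destruct (Rtotal_order (chi y1) (chi y2)) as [L|[L|L]].
    - assert (K := Mono (chi y1) (chi y2) ltac:(lra) L ltac:(lra)). rewrite B1, B2 in K.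
      rewrite (Rabs_left (chi y1 - chi y2)) by lra. rewrite (Rabs_left (y1 - y2)) by lra. lra.
    - rewrite L, Rminus_eq_0, Rabs_R0. apply Rmult_le_pos. lra. apply Rabs_pos.
    - assert (K := Mono (chi y2) (chi y1) ltac:(lra) L ltac:(lra)). rewrite B1, B2 in K.
      rewrite (Rabs_right (chi y1 - chi y2)) by lra. rewrite (Rabs_right (y1 - y2)) by lra. lra. }
  assert (Cont : forall y, Rabs y < e -> continuity_pt chi y).
  { intros y Hy eps Heps. exists (Rmin (eps / 2) (e - Rabs y)). split.
    apply Rmin_case; lra.
    intros z [_ Hz]. simpl in *. unfold R_dist in *.
    assert (Hz1 : Rabs (z - y) < eps / 2) by (eapply Rlt_le_trans; [exact Hz | apply Rmin_l]).
    assert (Hz2 : Rabs (z - y) < e - Rabs y) by (eapply Rlt_le_trans; [exact Hz | apply Rmin_r]).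
    assert (Rabs z < e).
    { replace z with ((z - y) + y) by ring. eapply Rle_lt_trans. apply Rabs_triang. lra. }
    eapply Rle_lt_trans. apply Lip; auto. lra. }
  assert (MonoC : forall y1 y2, Rabs y1 < e -> Rabs y2 < e -> y1 <= y2 -> chi y1 <= chi y2).
  { intros y1 y2 Hy1 Hy2 L. destruct (Spec y1 Hy1) as [A1 B1]. destruct (Spec y2 Hy2) as [A2 B2].
    apply Rabs_le_between in A1. apply Rabs_le_between in A2.
    destruct (Rle_lt_dec (chi y1) (chi y2)) as [K|K]; auto.
    assert (K' := Mono (chi y2) (chi y1) ltac:(lra) K ltac:(lra)). rewrite B1, B2 in K'. lra. }
  assert (Der : forall y, Rabs y < e -> is_derive chi y (/ Derive f (chi y))).
  { intros y Hy. set (r := (e - Rabs y) / 2).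
    assert (Hr : 0 < r) by (unfold r; lra).
    assert (Hl : Rabs (y - r) < e).
    { unfold Rminus. eapply Rle_lt_trans. apply Rabs_triang. rewrite Rabs_Ropp, (Rabs_right r) by lra. unfold r. lra. }
    assert (Hu : Rabs (y + r) < e).
    { eapply Rle_lt_trans. apply Rabs_triang. rewrite (Rabs_right r) by lra. unfold r. lra. }
    assert (Hyr : y - r < y < y + r) by lra.
    set (Prf := fun a (_ : chi (y - r) <= a <= chi (y + r)) => ex_derive_Reals_0 f a (Hd a)).
    assert (Pi : chi (y - r) <= chi y <= chi (y + r)) by (split; apply MonoC; auto; lra).
    assert (Cmp : forall x0, y - r <= x0 <= y + r -> comp f chi x0 = id x0).
    { intros x0 Hx0. unfold comp, id. apply Spec.
      destruct (Rle_lt_dec 0 x0).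
      - rewrite Rabs_right by lra. apply Rabs_def2 in Hu. lra.
      - rewrite Rabs_left by lra. apply Rabs_def2 in Hl. lra. }
    assert (Nz : derive_pt f (chi y) (Prf (chi y) Pi) <> 0).
    { rewrite Derive_Reals. assert (Derive f (chi y) > 1/2) by (apply Dpos, Spec; auto). lra. }
    assert (K := Ranalysis5.derivable_pt_lim_recip_interv f chi (y - r) (y + r) y Prf (Cont y Hy) ltac:(lra) Hyr Pi Cmp Nz).
    rewrite Derive_Reals in K. apply is_derive_Reals. unfold Rdiv in K. rewrite Rmult_1_l in K. exact K. }
  exists e, chi. split. unfold e; lra. split; [|split].
  - intros x Hx. apply Inv1. unfold e in Hx. lra.
  - intros y Hy. apply Spec; auto.
  - intros y Hy n. revert y Hy. induction n; intros y Hy. apply Cn_0.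
    assert (Lo : locally y (fun z => Rabs z < e)).
    { apply (locally_interval _ _ (-e) e); simpl; try (apply Rabs_def2 in Hy; lra).
      intros z Ha Hb. apply Rabs_def1; simpl in *; lra. }
    apply Cn_S; split.
    + apply filter_imp with (2 := Lo). intros z Hz. eexists. apply Der; auto.
    + apply Cn_ext_loc with (fun z => / Derive f (chi z)).
      apply filter_imp with (2 := Lo). intros z Hz. symmetry. apply is_derive_unique. apply Der; auto.
      apply (Cn_comp n Rinv (fun z => Derive f (chi z))).
      * apply Cn_inv. assert (Derive f (chi y) > 1/2) by (apply Dpos, Spec; auto). lra.
      * apply Cn_comp. apply Cinf_all_Derive; auto. apply IHn; auto.
Qed.

Lemma partial_ext b f g p : (forall p, f p = g p) -> partial b f p = partial b g p.
Proof. intro H. destruct b; simpl; apply Derive_ext; intro; apply H. Qed.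

Lemma iter_partial_ext ds f g : (forall p, f p = g p) -> forall p, iter_partial ds f p = iter_partial ds g p.
Proof.
  intro H. induction ds as [|b ds IH]; intro p; simpl. apply H.
  apply partial_ext. exact IH. Qed.

Lemma Derive_affine (al be : R) x : Derive (fun t => al + be * t) x = be.
Proof. apply is_derive_unique. auto_derive; auto; ring. Qed.

Lemma iter_partial_affine al be ga ds : exists al' be' ga', forall p,
  iter_partial ds (fun p => al + be * fst p + ga * snd p) p = al' + be' * fst p + ga' * snd p.
Proof.
  induction ds as [|b ds [al' [be' [ga' IH]]]].
  - exists al, be, ga. intro; reflexivity.
  - destruct b.
    + exists be', 0, 0. intro p. change (partial true (iter_partial ds (fun p => al + be * fst p + ga * snd p)) p = be' + 0 * fst p + 0 * snd p).
      rewrite (partial_ext _ _ _ _ IH). simpl.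
      rewrite (Derive_ext _ (fun t => (al' + ga' * snd p) + be' * t)) by (intro; ring).
      rewrite Derive_affine. ring.
    + exists ga', 0, 0. intro p. change (partial false (iter_partial ds (fun p => al + be * fst p + ga * snd p)) p = ga' + 0 * fst p + 0 * snd p).
      rewrite (partial_ext _ _ _ _ IH). simpl.
      rewrite Derive_affine. ring.
Qed.

Lemma smooth2_affine F al be ga Q e : (forall p, F p = al + be * fst p + ga * snd p) -> smooth2_near F Q e.
Proof.
  intros HF ds p _.
  destruct (iter_partial_affine al be ga ds) as [al' [be' [ga' H]]].
  assert (E : forall p, iter_partial ds F p = al' + be' * fst p + ga' * snd p).
  { intro q. rewrite <- H. apply iter_partial_ext. exact HF. }
  split.
  - intros [|]; simpl.
    + apply (ex_derive_ext (fun t => (al' + ga' * snd p) + be' * t)). intro t; rewrite E; simpl; ring.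
      auto_derive; auto.
    + apply (ex_derive_ext (fun t => (al' + be' * fst p) + ga' * t)). intro t; rewrite E; simpl; ring.
      auto_derive; auto.
  - apply (continuous_ext (fun q => al' + be' * fst q + ga' * snd q)). intro; now rewrite E.
    destruct p as [x y].
    apply (continuous_plus (fun q : R * R => al' + be' * fst q) (fun q : R * R => ga' * snd q)).
    apply (continuous_plus (fun q : R * R => al') (fun q : R * R => be' * fst q)).
    apply continuous_const.
    apply (continuous_mult (fun _ : R * R => be') fst). apply continuous_const. apply continuous_fst.
    apply (continuous_mult (fun _ : R * R => ga') snd). apply continuous_const. apply continuous_snd.
Qed.

Lemma affine_diffeo m11 m12 m21 m22 q1 q2 :
  m11 * m22 - m12 * m21 <> 0 ->
  diffeo2_germ (fun p => (m11 * (fst p - q1) + m12 * (snd p - q2), m21 * (fst p - q1) + m22 * (snd p - q2))) (q1, q2).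
Proof.
  intro Hd. set (D := m11 * m22 - m12 * m21) in *.
  exists 1, (fun p => (q1 + (m22 * fst p - m12 * snd p) / D, q2 + (- m21 * fst p + m11 * snd p) / D)).
  split. lra. split; [split|split; [split|split]].
  - apply (smooth2_affine _ (- m11 * q1 - m12 * q2) m11 m12). intro; simpl; ring.
  - apply (smooth2_affine _ (- m21 * q1 - m22 * q2) m21 m22). intro; simpl; ring.
  - apply (smooth2_affine _ q1 (m22 / D) (- m12 / D)). intro; simpl; field; auto.
  - apply (smooth2_affine _ q2 (- m21 / D) (m11 / D)). intro; simpl; field; auto.
  - intros [x y] _. simpl. unfold D in *. f_equal; field; auto.
  - intros [x y] _. simpl. unfold D in *. f_equal; field; auto.
Qed.

Lemma alg_fwd x4 y4 x5 y5 x6 y6 x7 y7 :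
  x5 * y4 - y5 * x4 <> 0 ->
  -77 * (x6 * y4 - y6 * x4) ^ 2 + 105 * (x5 * y4 - y5 * x4) * (x6 * y5 - y6 * x5)
    + 60 * (x5 * y4 - y5 * x4) * (x7 * y4 - y7 * x4) = 0 ->
  exists m11 m12 m21 m22 q r u, m11 * m22 - m12 * m21 <> 0 /\
    m11 * x4 + m12 * y4 = 24 * 1 ^ 4 /\ m21 * x4 + m22 * y4 = 0 /\
    m11 * x5 + m12 * y5 = 120 * (4 * 1 ^ 3 * q) /\ m21 * x5 + m22 * y5 = 120 * 1 ^ 5 /\
    m11 * x6 + m12 * y6 = 720 * (4 * 1 ^ 3 * r + 6 * 1 ^ 2 * q ^ 2) /\
    m21 * x6 + m22 * y6 = 720 * (5 * 1 ^ 4 * q) /\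
    m11 * x7 + m12 * y7 = 5040 * (4 * 1 ^ 3 * u + 12 * 1 ^ 2 * q * r + 4 * 1 * q ^ 3) /\
    m21 * x7 + m22 * y7 = 5040 * (5 * 1 ^ 4 * r + 10 * 1 ^ 3 * q ^ 2).
Proof.
  intros HA Hc.
  set (Dr := x4 * y5 - y4 * x5).
  assert (HD : Dr <> 0) by (unfold Dr; intro Z; apply HA; lra).
  set (be := (x4 * y6 - y4 * x6) / (6 * Dr)).
  set (al := (x6 * y5 - y6 * x5) / (30 * Dr)).
  set (al' := (x7 * y5 - y7 * x5) / (210 * Dr)).
  set (be' := (x4 * y7 - y4 * x7) / (42 * Dr)).
  set (q := be / 5).
  set (r := (al + 4 * q * be - 6 * q ^ 2) / 4).
  set (u := (al' + 4 * q * be' - 12 * q * r - 4 * q ^ 3) / 4).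
  exists ((24 * y5 - 480 * q * y4) / Dr), ((480 * q * x4 - 24 * x5) / Dr),
         (- 120 * y4 / Dr), (120 * x4 / Dr), q, r, u.
  assert (E : Dr ^ 2 * (2520 * be' - 3150 * al - 2772 * be ^ 2) =
     -77 * (x6 * y4 - y6 * x4) ^ 2 + 105 * (x5 * y4 - y5 * x4) * (x6 * y5 - y6 * x5)
    + 60 * (x5 * y4 - y5 * x4) * (x7 * y4 - y7 * x4)).
  { unfold be', al, be, Dr in *. field. auto. }
  rewrite Hc in E.
  assert (E' : 2520 * be' - 3150 * al - 2772 * be ^ 2 = 0).
  { apply (Rmult_eq_reg_l (Dr ^ 2)). rewrite Rmult_0_r. exact E. apply pow_nonzero; auto. }
  repeat split.
  - intro Z. assert (Z' : (24 * y5 - 480 * q * y4) / Dr * (120 * x4 / Dr) - (480 * q * x4 - 24 * x5) / Dr * (- 120 * y4 / Dr) = 2880 / Dr) by (unfold Dr in *; field; auto).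
    rewrite Z' in Z. unfold Rdiv in Z. apply Rmult_integral in Z as [Z|Z]. lra.
    apply Rinv_neq_0_compat in HD. contradiction.
  - unfold Dr in *; field; auto.
  - unfold Dr in *; field; auto.
  - unfold q, be, Dr in *; field; auto.
  - unfold Dr in *; field; auto.
  - unfold r, q, al, be, Dr in *; field; auto.
  - unfold q, be, Dr in *; field; auto.
  - unfold u, r, q, al', be', al, be, Dr in *; field; auto.
  - transitivity (5040 * be').
    unfold be', Dr in *; field; auto.
    assert (K : 5 * 1 ^ 4 * r + 10 * 1 ^ 3 * q ^ 2 = 5/4 * al + 11/10 * be ^ 2) by (unfold r, q; field).
    rewrite K. lra.
Qed.

Lemma Dn_lin k m1 m2 G1 G2 P c1 c2 : Cn k G1 0 -> Cn k G2 0 -> Cn k P 0 -> (1 <= k)%nat ->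
  Derive_n (fun s => m1 * (G1 s - c1) + m2 * (G2 s - c2) - P s) k 0 =
  m1 * Derive_n G1 k 0 + m2 * Derive_n G2 k 0 - Derive_n P k 0.
Proof.
  intros H1 H2 H3 Hk. destruct k as [|k]. lia.
  assert (A1 : Cn (S k) (fun s => G1 s - c1) 0) by (apply Cn_minus; auto; apply Cn_const).
  assert (A2 : Cn (S k) (fun s => G2 s - c2) 0) by (apply Cn_minus; auto; apply Cn_const).
  assert (B1 := Cn_scal _ m1 _ _ A1). assert (B2 := Cn_scal _ m2 _ _ A2).
  rewrite (Dn_minus _ _ _ _ (Cn_plus _ _ _ _ B1 B2) H3).
  rewrite (Dn_plus _ _ _ _ B1 B2). rewrite !Derive_n_scal_l.
  rewrite (Dn_minus _ _ _ _ H1 (Cn_const _ c1 0)).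
  rewrite (Dn_minus _ _ _ _ H2 (Cn_const _ c2 0)).
  rewrite !Derive_n_const. ring.
Qed.

Lemma Cn_h n m1 m2 G1 G2 chi c1 c2 j t : Cn n G1 (chi t) -> Cn n G2 (chi t) -> Cn n chi t ->
  Cn n (fun t => m1 * (G1 (chi t) - c1) + m2 * (G2 (chi t) - c2) - t ^ j) t.
Proof.
  intros H1 H2 H3.
  assert (K1 := Cn_comp _ _ _ _ H1 H3). assert (K2 := Cn_comp _ _ _ _ H2 H3).
  apply (Cn_minus n (fun t => m1 * (G1 (chi t) - c1) + m2 * (G2 (chi t) - c2)) (fun t => t ^ j)).
  apply (Cn_plus n (fun t => m1 * (G1 (chi t) - c1)) (fun t => m2 * (G2 (chi t) - c2))).
  apply (Cn_scal n m1 (fun t => G1 (chi t) - c1)). exact (Cn_minus _ _ _ _ K1 (Cn_const _ c1 t)).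
  apply (Cn_scal n m2 (fun t => G2 (chi t) - c2)). exact (Cn_minus _ _ _ _ K2 (Cn_const _ c2 t)).
  exact (Cn_pow n j (fun t => t) t (Cn_id n t)).
Qed.

Lemma cf_peval P k : cf (peval P) k = nth k P 0.
Proof. unfold cf. rewrite Dn_peval0. field. apply not_0_INR, fact_neq_0. Qed.

Lemma forward_dir (a b : R) (gamma : R -> R * R) :
  a < 0 < b ->
  smooth1_on_interval (fun t => fst (gamma t)) a b ->
  smooth1_on_interval (fun t => snd (gamma t)) a b ->
  (dn gamma 1 0 = (0, 0) /\ dn gamma 2 0 = (0, 0) /\ dn gamma 3 0 = (0, 0) /\
    coefA gamma <> 0 /\
    -77 * (coefB gamma) ^ 2 + 105 * coefA gamma * coefD gamma
      + 60 * coefA gamma * coefC gamma = 0) ->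
   exists (h : R -> R * R) (e : R),
     0 < e /\ curve_smooth_near h 0 e /\
     (forall k : nat, (k <= 7)%nat -> dn h k 0 = (0, 0)) /\
     A_equivalent_at0 gamma (fun s => (s ^ 4 + fst (h s), s ^ 5 + snd (h s))).
Proof.
  intros Hab Sg1 Sg2 [Z1 [Z2 [Z3 [HA HQ]]]].
  set (g1 := fun t => fst (gamma t)) in *. set (g2 := fun t => snd (gamma t)) in *.
  unfold coefA, coefB, coefC, coefD, det2, dn in HA, HQ. cbn [fst snd] in HA, HQ.
  fold g1 g2 in HA, HQ.
  unfold dn in Z1, Z2, Z3. fold g1 g2 in Z1, Z2, Z3.
  apply pair_equal_spec in Z1 as [X1 Y1]. apply pair_equal_spec in Z2 as [X2 Y2].
  apply pair_equal_spec in Z3 as [X3 Y3].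
  destruct (alg_fwd _ _ _ _ _ _ _ _ HA HQ) as [m11 [m12 [m21 [m22 [q [r [u
    [Hdet [E4 [F4 [E5 [F5 [E6 [F6 [E7 F7]]]]]]]]]]]]]]].
  set (P := [0; 1; q; r; u]).
  set (phi := peval P).
  assert (Cphi : forall n x, Cn n phi x) by (intros; apply Cn_peval).
  assert (phi0 : phi 0 = 0) by (unfold phi, P; simpl; ring).
  assert (dphi0 : Derive phi 0 = 1) by (unfold phi; rewrite Derive_peval; unfold P; simpl; ring).
  destruct (ift phi Cphi phi0 dphi0) as [e1 [chi [He1 [Inv1 [Inv2 Cchi]]]]].
  assert (chi0 : chi 0 = 0) by (rewrite <- phi0 at 1; apply Inv1; rewrite Rabs_R0; lra).
  set (q1 := g1 0). set (q2 := g2 0).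
  assert (Cc : continuity_pt chi 0).
  { apply (Cn_cont 1). lia. apply Cchi. rewrite Rabs_R0; lra. }
  destruct (Cc (Rmin (- a) b) ltac:(apply Rmin_case; lra)) as [alp [Halp Hal]].
  set (eh := Rmin e1 alp).
  assert (Heh : 0 < eh) by (unfold eh; apply Rmin_case; lra).
  assert (InAB : forall t, Rabs t < eh -> a < chi t < b).
  { intros t Ht. destruct (Req_dec t 0) as [->|Ht0]. rewrite chi0; lra.
    assert (K : Rabs (chi t - chi 0) < Rmin (- a) b).
    { apply (Hal t). split. split. constructor. auto. simpl. unfold R_dist. rewrite Rminus_0_r.
      eapply Rlt_le_trans. exact Ht. apply Rmin_r. }
    rewrite chi0, Rminus_0_r in K. apply Rabs_def2 in K.
    assert (Rmin (- a) b <= - a) by apply Rmin_l. assert (Rmin (- a) b <= b) by apply Rmin_r. lra. }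
  assert (Teh : forall t, Rabs t < eh -> Rabs t < e1).
  { intros t Ht. eapply Rlt_le_trans. exact Ht. apply Rmin_l. }
  assert (Cg1 : forall x, a < x < b -> Cinf g1 x) by (intros; apply (smooth_int_Cinf g1 a b); auto).
  assert (Cg2 : forall x, a < x < b -> Cinf g2 x) by (intros; apply (smooth_int_Cinf g2 a b); auto).
  exists (fun t => (m11 * (g1 (chi t) - q1) + m12 * (g2 (chi t) - q2) - t ^ 4,
                    m21 * (g1 (chi t) - q1) + m22 * (g2 (chi t) - q2) - t ^ 5)), eh.
  split; [exact Heh|split; [|split]].
  -
    split; intros n t Ht; rewrite Rminus_0_r in Ht; simpl;
    [assert (K := Cn_h (S n) m11 m12 g1 g2 chi q1 q2 4 t (Cg1 _ (InAB t Ht) (S n)) (Cg2 _ (InAB t Ht) (S n)) (Cchi t (Teh t Ht) (S n)))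
    |assert (K := Cn_h (S n) m21 m22 g1 g2 chi q1 q2 5 t (Cg1 _ (InAB t Ht) (S n)) (Cg2 _ (InAB t Ht) (S n)) (Cchi t (Teh t Ht) (S n)))];
    apply locally_singleton in K; apply K; lia.
  -
    assert (Cg10 := Cg1 0 ltac:(lra) 8%nat). assert (Cg20 := Cg2 0 ltac:(lra) 8%nat).
    assert (CF : forall k, cf phi k = nth k P 0) by (intro; apply cf_peval).
    assert (Pw4 := pow4_vals phi (Cphi 8%nat 0) phi0).
    assert (Pw5 := pow5_vals phi (Cphi 8%nat 0) phi0).
    rewrite !CF in Pw4, Pw5. unfold P in Pw4, Pw5. cbn [nth] in Pw4, Pw5.
    destruct Pw4 as [A1 [A2 [A3 [A4 [A5 [A6 A7]]]]]].
    destruct Pw5 as [B1 [B2 [B3 [B4 [B5 [B6 B7]]]]]].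
    assert (Lo : locally 0 (fun t => Rabs t < e1)).
    { apply (locally_interval _ _ (-e1) e1); simpl; try lra. intros y Ha Hb. apply Rabs_def1; simpl in *; lra. }
    assert (Cchi0 : Cinf chi 0) by (apply Cchi; rewrite Rabs_R0; lra).
    intros k Hk. unfold dn. cbn [fst snd]. apply pair_equal_spec; split.
    + set (H1 := fun s => m11 * (g1 s - q1) + m12 * (g2 s - q2) - phi s ^ 4).
      transitivity (Derive_n (fun t => H1 (chi t)) k 0).
      { apply Derive_n_ext_loc. apply filter_imp with (2 := Lo). intros t Ht. unfold H1. rewrite Inv2; auto. }
      assert (CH : Cn 8 H1 0).
      { apply (Cn_minus 8 (fun s => m11 * (g1 s - q1) + m12 * (g2 s - q2)) (fun s => phi s ^ 4)).
        apply (Cn_plus 8 (fun s => m11 * (g1 s - q1)) (fun s => m12 * (g2 s - q2))).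
        apply (Cn_scal 8 m11 (fun s => g1 s - q1)). exact (Cn_minus _ _ _ _ Cg10 (Cn_const _ q1 0)).
        apply (Cn_scal 8 m12 (fun s => g2 s - q2)). exact (Cn_minus _ _ _ _ Cg20 (Cn_const _ q2 0)).
        exact (Cn_pow 8 4 phi 0 (Cphi 8%nat 0)). }
      apply (Van_comp 7 8 H1 chi 0); try lia.
      * rewrite chi0. exact (Cn_le 7 8 _ _ ltac:(lia) CH).
      * exact (Cchi0 7%nat).
      * intros j Hj _. rewrite chi0. destruct j.
        { simpl. unfold H1, q1, q2. rewrite phi0. ring. }
        unfold H1. rewrite (Dn_lin (S j) m11 m12 g1 g2 (fun s => phi s ^ 4) q1 q2); try lia.
        2: exact (Cn_le (S j) 8 _ _ ltac:(lia) Cg10).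
        2: exact (Cn_le (S j) 8 _ _ ltac:(lia) Cg20).
        2: exact (Cn_le (S j) 8 _ _ ltac:(lia) (Cn_pow 8 4 phi 0 (Cphi 8%nat 0))).
        destruct j as [|[|[|[|[|[|[|]]]]]]]; try lia.
        -- rewrite X1, Y1, A1. ring.
        -- rewrite X2, Y2, A2. ring.
        -- rewrite X3, Y3, A3. ring.
        -- rewrite A4, E4. ring.
        -- rewrite A5, E5. ring.
        -- rewrite A6, E6. ring.
        -- rewrite A7, CF, E7. unfold P. cbn [nth]. ring.
    + set (H2 := fun s => m21 * (g1 s - q1) + m22 * (g2 s - q2) - phi s ^ 5).
      transitivity (Derive_n (fun t => H2 (chi t)) k 0).
      { apply Derive_n_ext_loc. apply filter_imp with (2 := Lo). intros t Ht. unfold H2. rewrite Inv2; auto. }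
      assert (CH : Cn 8 H2 0).
      { apply (Cn_minus 8 (fun s => m21 * (g1 s - q1) + m22 * (g2 s - q2)) (fun s => phi s ^ 5)).
        apply (Cn_plus 8 (fun s => m21 * (g1 s - q1)) (fun s => m22 * (g2 s - q2))).
        apply (Cn_scal 8 m21 (fun s => g1 s - q1)). exact (Cn_minus _ _ _ _ Cg10 (Cn_const _ q1 0)).
        apply (Cn_scal 8 m22 (fun s => g2 s - q2)). exact (Cn_minus _ _ _ _ Cg20 (Cn_const _ q2 0)).
        exact (Cn_pow 8 5 phi 0 (Cphi 8%nat 0)). }
      apply (Van_comp 7 8 H2 chi 0); try lia.
      * rewrite chi0. exact (Cn_le 7 8 _ _ ltac:(lia) CH).
      * exact (Cchi0 7%nat).
      * intros j Hj _. rewrite chi0. destruct j.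
        { simpl. unfold H2, q1, q2. rewrite phi0. ring. }
        unfold H2. rewrite (Dn_lin (S j) m21 m22 g1 g2 (fun s => phi s ^ 5) q1 q2); try lia.
        2: exact (Cn_le (S j) 8 _ _ ltac:(lia) Cg10).
        2: exact (Cn_le (S j) 8 _ _ ltac:(lia) Cg20).
        2: exact (Cn_le (S j) 8 _ _ ltac:(lia) (Cn_pow 8 5 phi 0 (Cphi 8%nat 0))).
        destruct j as [|[|[|[|[|[|[|]]]]]]]; try lia.
        -- rewrite X1, Y1, B1. ring.
        -- rewrite X2, Y2, B2. ring.
        -- rewrite X3, Y3, B3. ring.
        -- rewrite B4, F4. ring.
        -- rewrite B5, F5. ring.
        -- rewrite B6, F6. ring.
        -- rewrite B7, F7. ring.
  -
    exists phi, (fun p => (m11 * (fst p - q1) + m12 * (snd p - q2), m21 * (fst p - q1) + m22 * (snd p - q2))), e1.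
    split; [exact phi0|split; [|split; [|split; [|split]]]].
    + cbn [fst snd]. rewrite chi0. unfold q1, q2, g1, g2. f_equal; ring.
    + exists e1, chi. split; [exact He1|split; [|split; [|split]]].
      * intros n x _. assert (K := Cphi (S n) x). apply locally_singleton in K. apply K; lia.
      * intros n y Hy. rewrite phi0, Rminus_0_r in Hy. assert (K := Cchi y Hy (S n)).
        apply locally_singleton in K. apply K; lia.
      * intros x Hx. rewrite Rminus_0_r in Hx. auto.
      * intros y Hy. rewrite phi0, Rminus_0_r in Hy. auto.
    + replace (gamma 0) with (q1, q2) by (unfold q1, q2, g1, g2; symmetry; apply surjective_pairing).
      apply affine_diffeo; auto.
    + exact He1.
    + intros s Hs. cbn [fst snd]. rewrite Inv1 by auto. unfold g1, g2. f_equal; ring.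
Qed.

Theorem mainTheorem13 (a b : R) (gamma : R -> R * R) :
  a < 0 < b ->
  smooth1_on_interval (fun t => fst (gamma t)) a b ->
  smooth1_on_interval (fun t => snd (gamma t)) a b ->
  ((dn gamma 1 0 = (0, 0) /\ dn gamma 2 0 = (0, 0) /\ dn gamma 3 0 = (0, 0) /\
    coefA gamma <> 0 /\
    -77 * (coefB gamma) ^ 2 + 105 * coefA gamma * coefD gamma
      + 60 * coefA gamma * coefC gamma = 0)
   <->
   exists (h : R -> R * R) (e : R),
     0 < e /\ curve_smooth_near h 0 e /\
     (forall k : nat, (k <= 7)%nat -> dn h k 0 = (0, 0)) /\
     A_equivalent_at0 gamma (fun s => (s ^ 4 + fst (h s), s ^ 5 + snd (h s)))).
Proof.
  intros Hab S1 S2. split.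
  - apply (forward_dir a b); auto.
  - apply (reverse_dir a b); auto.
Qed.
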